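(* Let $H_0,H_1$ be complex Hilbert spaces, $G$ a densely defined closed operator from $H_0$ into $H_1$ and $D$ a densely defined closed operator from $H_1$ into $H_0$ with $-G^*\subset D$. Let $H$ be a Hilbert space and $\kappa\in\mathcal{L}(\mathrm{BD}(G),H)$ injective with dense range. Let $a\in\mathcal{L}(H_1)$ and $m\in\mathcal{L}(H_0)$ be coercive. Then the Dirichlet-to-Neumann operator $\Lambda_H$ in $H$ associated with $-DaG+m$ is m-sectorial. In particular, if both $a$ and $m$ are self-adjoint, then $\Lambda_H$ is self-adjoint.
   Context: Put $\mathring D=-G^*$ and $\mathring G=-D^*$. Domains carry graph inner products, e.g. $(u,v)_{\mathrm{dom}(G)}=(u,v)_{H_0}+(Gu,Gv)_{H_1}$. $\mathrm{BD}(G)$ is the orthogonal complement of $\mathrm{dom}(\mathring G)$ in $\mathrm{dom}(G)$, $\mathrm{BD}(D)$ the orthogonal complement of $\mathrm{dom}(\mathring D)$ in $\mathrm{dom}(D)$, with induced inner products; $\pi_{\mathrm{BD}(D)}$ is the orthogonal projection of $\mathrm{dom}(D)$ onto $\mathrm{BD}(D)$. $G$ maps $\mathrm{BD}(G)$ into $\mathrm{BD}(D)$. Coercive: $\mathrm{Re}(Mx,x)\ge\mu\|x\|^2$ for some $\mu>0$. For coercive $a,m$ and $u_0\in\mathrm{BD}(G)$ there is a unique $u\in\mathrm{dom}(G)$ with $aGu\in\mathrm{dom}(D)$, $mu-DaGu=0$, $u-u_0\in\mathrm{dom}(\mathring G)$; set $\Lambda u_0=\pi_{\mathrm{BD}(D)}(aGu)$.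 $\kappa^*\colon H\to\mathrm{BD}(G)$ denotes the Hilbert space adjoint of $\kappa$. The operator $\Lambda_H$ in $H$ is defined by: for $\varphi,\psi\in H$, $\varphi\in\mathrm{dom}(\Lambda_H)$ and $\Lambda_H\varphi=\psi$ iff there exists $u_0\in\mathrm{BD}(G)$ with $\kappa(u_0)=\varphi$ and $\Lambda u_0=G\kappa^*\psi$. *)

(* Defs.v *)
From Stdlib Require Import Reals.
From Coquelicot Require Import Complex.
Open Scope R_scope.

Record CHilbert := {
  hs :> Type;
  hzero : hs;
  hadd : hs -> hs -> hs;
  hopp : hs -> hs;
  hscal : C -> hs -> hs;
  hinner : hs -> hs -> C;
  hadd_assoc : forall x y z, hadd x (hadd y z) = hadd (hadd x y) z;
  hadd_comm : forall x y, hadd x y = hadd y x;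
  hadd_zero : forall x, hadd x hzero = x;
  hadd_opp : forall x, hadd x (hopp x) = hzero;
  hscal_assoc : forall (a b : C) x, hscal a (hscal b x) = hscal (Cmult a b) x;
  hscal_one : forall x, hscal (RtoC 1) x = x;
  hscal_distr_l : forall (a : C) x y, hscal a (hadd x y) = hadd (hscal a x) (hscal a y);
  hscal_distr_r : forall (a b : C) x, hscal (Cplus a b) x = hadd (hscal a x) (hscal b x);
  hinner_conj : forall x y, hinner y x = Cconj (hinner x y);
  hinner_add_l : forall x y z, hinner (hadd x y) z = Cplus (hinner x z) (hinner y z);
  hinner_scal_l : forall (a : C) x y, hinner (hscal a x) y = Cmult a (hinner x y);
  hinner_pos : forall x, 0 <= Re (hinner x x);
  hinner_def : forall x, hinner x x = RtoC 0 -> x = hzero;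
  hcomplete : forall u : nat -> hs,
    (forall eps, 0 < eps -> exists N, forall n k, (N <= n)%nat -> (N <= k)%nat ->
        sqrt (Re (hinner (hadd (u n) (hopp (u k))) (hadd (u n) (hopp (u k))))) < eps) ->
    exists l, forall eps, 0 < eps -> exists N, forall n, (N <= n)%nat ->
        sqrt (Re (hinner (hadd (u n) (hopp l)) (hadd (u n) (hopp l)))) < eps
}.

Arguments hzero {_}.
Arguments hadd {_} _ _.
Arguments hopp {_} _.
Arguments hscal {_} _ _.
Arguments hinner {_} _ _.

Definition hsub {X : CHilbert} (x y : X) : X := hadd x (hopp y).
Definition hnorm {X : CHilbert} (x : X) : R := sqrt (Re (hinner x x)).

Definition cvg_to {X : CHilbert} (u : nat -> X) (l : X) : Prop :=
  forall eps, 0 < eps -> exists N, forall n, (N <= n)%nat -> hnorm (hsub (u n) l) < eps.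

Definition is_subspace {X : CHilbert} (S : X -> Prop) : Prop :=
  S hzero /\ (forall x y, S x -> S y -> S (hadd x y)) /\
  (forall (c : C) x, S x -> S (hscal c x)).

Definition dense_set {X : CHilbert} (S : X -> Prop) : Prop :=
  forall x eps, 0 < eps -> exists s, S s /\ hnorm (hsub x s) < eps.

Section Defs.
Variables X Y : CHilbert.

(* an operator from X to Y with domain dom; values of T off dom are irrelevant *)
Definition linear_on (dom : X -> Prop) (T : X -> Y) : Prop :=
  (forall x y, dom x -> dom y -> T (hadd x y) = hadd (T x) (T y)) /\
  (forall (c : C) x, dom x -> T (hscal c x) = hscal c (T x)).

Definition closed_op (dom : X -> Prop) (T : X -> Y) : Prop :=
  forall (u : nat -> X) x y, (forall n, dom (u n)) ->
    cvg_to u x -> cvg_to (fun n => T (u n)) y -> dom x /\ T x = y.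

Definition densely_defined_closed (dom : X -> Prop) (T : X -> Y) : Prop :=
  is_subspace dom /\ linear_on dom T /\ dense_set dom /\ closed_op dom T.

(* adj_rel dom T y z  :<->  y is in dom(T^* ) and T^* y = z *)
Definition adj_rel (dom : X -> Prop) (T : X -> Y) (y : Y) (z : X) : Prop :=
  forall x, dom x -> hinner (T x) y = hinner x z.

Definition dom_adj (dom : X -> Prop) (T : X -> Y) (y : Y) : Prop :=
  exists z, adj_rel dom T y z.

Definition graph_inner (T : X -> Y) (x y : X) : C :=
  Cplus (hinner x y) (hinner (T x) (T y)).

Definition graph_norm (T : X -> Y) (x : X) : R := sqrt (Re (graph_inner T x x)).

Definition bounded_linear (T : X -> Y) : Prop :=
  linear_on (fun _ => True) T /\ exists c, forall x, hnorm (T x) <= c * hnorm x.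

End Defs.

Arguments linear_on {_ _} _ _.
Arguments closed_op {_ _} _ _.
Arguments densely_defined_closed {_ _} _ _.
Arguments adj_rel {_ _} _ _ _ _.
Arguments dom_adj {_ _} _ _ _.
Arguments graph_inner {_ _} _ _ _.
Arguments graph_norm {_ _} _ _.
Arguments bounded_linear {_ _} _.

Definition coercive {X : CHilbert} (M : X -> X) : Prop :=
  exists mu, 0 < mu /\ forall x, mu * (hnorm x * hnorm x) <= Re (hinner (M x) x).

Definition selfadjoint_bounded {X : CHilbert} (M : X -> X) : Prop :=
  forall x y, hinner (M x) y = hinner x (M y).

Section Setting.
Variables (H0 H1 H : CHilbert).
Variables (domG : H0 -> Prop) (G : H0 -> H1) (domD : H1 -> Prop) (D : H1 -> H0).

Definition minus_adj_sub : Prop :=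
  forall y z, adj_rel domG G y z -> domD y /\ D y = hopp z.

(* dom(G°) = dom(-D^* ) = dom(D^* ),  dom(D°) = dom(-G^* ) = dom(G^* ) *)
Definition dom_Gring (x : H0) : Prop := dom_adj domD D x.
Definition dom_Dring (y : H1) : Prop := dom_adj domG G y.

Definition BD_G (u : H0) : Prop :=
  domG u /\ forall v, dom_Gring v -> graph_inner G u v = RtoC 0.
Definition BD_D (y : H1) : Prop :=
  domD y /\ forall v, dom_Dring v -> graph_inner D y v = RtoC 0.

(* p = pi_{BD(D)} q  (orthogonal projection in dom(D)) *)
Definition proj_BD_D (q p : H1) : Prop :=
  BD_D p /\ forall r, BD_D r -> graph_inner D (hsub q p) r = RtoC 0.

Variables (a : H1 -> H1) (m : H0 -> H0).

Definition Lambda_rel (u0 : H0) (f : H1) : Prop :=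
  exists u, domG u /\ domD (a (G u)) /\ hsub (m u) (D (a (G u))) = hzero /\
            dom_Gring (hsub u u0) /\ proj_BD_D (a (G u)) f.

Variable kappa : H0 -> H.  (* only its restriction to BD(G) matters *)

Definition kappa_hyp : Prop :=
  linear_on BD_G kappa /\
  (exists c, forall u, BD_G u -> hnorm (kappa u) <= c * graph_norm G u) /\
  (forall u v, BD_G u -> BD_G v -> kappa u = kappa v -> u = v) /\
  (forall h eps, 0 < eps -> exists u, BD_G u /\ hnorm (hsub h (kappa u)) < eps).

(* w = kappa^* psi  (Hilbert adjoint, BD(G) with the graph inner product) *)
Definition kappa_adj (psi : H) (w : H0) : Prop :=
  BD_G w /\ forall u, BD_G u -> hinner (kappa u) psi = graph_inner G u w.

Definition DtN_H (phi psi : H) : Prop :=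
  exists u0, BD_G u0 /\ kappa u0 = phi /\
    exists w, kappa_adj psi w /\ Lambda_rel u0 (G w).

End Setting.

Definition linear_rel {X : CHilbert} (T : X -> X -> Prop) : Prop :=
  T hzero hzero /\
  (forall x1 y1 x2 y2, T x1 y1 -> T x2 y2 -> T (hadd x1 x2) (hadd y1 y2)) /\
  (forall (c : C) x y, T x y -> T (hscal c x) (hscal c y)).

Definition single_valued {X : CHilbert} (T : X -> X -> Prop) : Prop :=
  forall x y1 y2, T x y1 -> T x y2 -> y1 = y2.

(* Kato: T is m-sectorial if it is a (linear) operator whose numerical range lies in
   a sector {z : |arg (z - gamma)| <= theta}, theta < pi/2 (i.e. |Im z| <= c (Re z - gamma),
   c = tan theta >= 0), and T - gamma is m-accretive, i.e. T - gamma + zeta is surjective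
   for some zeta > 0. *)
Definition m_sectorial {X : CHilbert} (T : X -> X -> Prop) : Prop :=
  linear_rel T /\ single_valued T /\
  exists gamma c, 0 <= c /\
    (forall x y, T x y -> hnorm x = 1 ->
       Rabs (Im (hinner y x)) <= c * (Re (hinner y x) - gamma)) /\
    exists zeta, 0 < zeta /\
      forall f, exists x y, T x y /\ hadd y (hscal (RtoC (zeta - gamma)) x) = f.

Definition selfadjoint_rel {X : CHilbert} (T : X -> X -> Prop) : Prop :=
  linear_rel T /\ single_valued T /\ dense_set (fun x => exists y, T x y) /\
  forall x y, T x y <->
    (forall x' y', T x' y' -> hinner y' x = hinner x' y).

(* Main.v *)
Require Import Defs.
From Stdlib Require Import Reals Lra Psatz.
From Coquelicot Require Import Complex.
From Stdlib Require Import IndefiniteDescription.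
Open Scope R_scope.


Arguments hadd_assoc {_} _ _ _.
Arguments hadd_comm {_} _ _.
Arguments hadd_zero {_} _.
Arguments hadd_opp {_} _.
Arguments hscal_assoc {_} _ _ _.
Arguments hscal_one {_} _.
Arguments hscal_distr_l {_} _ _ _.
Arguments hscal_distr_r {_} _ _ _.
Arguments hinner_conj {_} _ _.
Arguments hinner_add_l {_} _ _ _.
Arguments hinner_scal_l {_} _ _ _.
Arguments hinner_pos {_} _.
Arguments hinner_def {_} _ _.
Arguments hcomplete {_} _ _.

Ltac ceq := apply injective_projections; simpl; ring.

Section Basic.
Variable X : CHilbert.
Implicit Types x y z : X.

Lemma hadd_zero_l x : hadd hzero x = x.
Proof. rewrite hadd_comm; apply hadd_zero. Qed.

Lemma hadd_opp_l x : hadd (hopp x) x = hzero.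
Proof. rewrite hadd_comm; apply hadd_opp. Qed.

Lemma hadd_cancel_l x y z : hadd x y = hadd x z -> y = z.
Proof.
  intro H. rewrite <- (hadd_zero_l y), <- (hadd_zero_l z), <- (hadd_opp_l x).
  rewrite <- !hadd_assoc, H. reflexivity.
Qed.

Lemma hopp_unique x y : hadd x y = hzero -> y = hopp x.
Proof. intro H. apply (hadd_cancel_l x). rewrite H, hadd_opp. reflexivity. Qed.

Lemma hscal_zero x : hscal (RtoC 0) x = hzero.
Proof.
  apply (hadd_cancel_l (hscal (RtoC 0) x)).
  rewrite <- hscal_distr_r, hadd_zero. f_equal. ceq.
Qed.

Lemma hscal_zero_v (c : C) : hscal c (@hzero X) = hzero.
Proof.
  apply (hadd_cancel_l (hscal c hzero)).
  rewrite <- hscal_distr_l, !hadd_zero. reflexivity.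
Qed.

Lemma hopp_scal x : hopp x = hscal (RtoC (-1)) x.
Proof.
  symmetry. apply hopp_unique.
  rewrite <- (hscal_one x) at 1. rewrite <- hscal_distr_r.
  replace (Cplus (RtoC 1) (RtoC (-1))) with (RtoC 0) by ceq.
  apply hscal_zero.
Qed.

Lemma hopp_hopp x : hopp (hopp x) = x.
Proof. symmetry. apply hopp_unique. apply hadd_opp_l. Qed.

Lemma hopp_add x y : hopp (hadd x y) = hadd (hopp x) (hopp y).
Proof. rewrite !hopp_scal, hscal_distr_l. reflexivity. Qed.

Lemma hopp_zero : hopp (@hzero X) = hzero.
Proof. rewrite hopp_scal. apply hscal_zero_v. Qed.

Lemma hsub_diag x : hsub x x = hzero.
Proof. apply hadd_opp. Qed.

Lemma hsub_zero x : hsub x hzero = x.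
Proof. unfold hsub. rewrite hopp_zero. apply hadd_zero. Qed.

Lemma hsub_eq x y : hsub x y = hzero -> x = y.
Proof.
  unfold hsub; intro H. apply hopp_unique in H. rewrite <- (hopp_hopp y), H.
  symmetry; apply hopp_hopp.
Qed.

Lemma hscal_opp (c : C) x : hscal c (hopp x) = hopp (hscal c x).
Proof. rewrite !hopp_scal, !hscal_assoc. f_equal. ceq. Qed.

Lemma hinner_add_r x y z : hinner x (hadd y z) = Cplus (hinner x y) (hinner x z).
Proof.
  rewrite hinner_conj, hinner_add_l, Cplus_conj, <- !hinner_conj. reflexivity.
Qed.

Lemma hinner_scal_r (c : C) x y : hinner x (hscal c y) = Cmult (Cconj c) (hinner x y).
Proof.
  rewrite hinner_conj, hinner_scal_l, Cmult_conj, <- hinner_conj. reflexivity.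
Qed.

Lemma hinner_zero_l y : hinner (@hzero X) y = RtoC 0.
Proof.
  rewrite <- (hscal_zero hzero), hinner_scal_l. ceq.
Qed.

Lemma hinner_zero_r y : hinner y (@hzero X) = RtoC 0.
Proof. rewrite hinner_conj, hinner_zero_l. ceq. Qed.

Lemma hinner_opp_l x y : hinner (hopp x) y = Copp (hinner x y).
Proof. rewrite hopp_scal, hinner_scal_l. ceq. Qed.

Lemma hinner_opp_r x y : hinner x (hopp y) = Copp (hinner x y).
Proof. rewrite hopp_scal, hinner_scal_r. ceq. Qed.

Lemma hinner_sub_l x y z : hinner (hsub x y) z = Cminus (hinner x z) (hinner y z).
Proof. unfold hsub. rewrite hinner_add_l, hinner_opp_l. ceq. Qed.

Lemma hinner_sub_r x y z : hinner z (hsub x y) = Cminus (hinner z x) (hinner z y).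
Proof. unfold hsub. rewrite hinner_add_r, hinner_opp_r. ceq. Qed.

Lemma hinner_im x : Im (hinner x x) = 0.
Proof.
  pose proof (hinner_conj x x) as H. destruct (hinner x x) as [a b].
  unfold Cconj in H; simpl in *. injection H. lra.
Qed.

Lemma hsub_split x y z : hsub x z = hadd (hsub x y) (hsub y z).
Proof.
  unfold hsub. rewrite <- hadd_assoc, (hadd_assoc (hopp y)), hadd_opp_l, hadd_zero_l.
  reflexivity.
Qed.

Lemma hsub_add_cancel x y : hadd (hsub x y) y = x.
Proof. unfold hsub. rewrite <- hadd_assoc, hadd_opp_l, hadd_zero. reflexivity. Qed.

Lemma hsub_opp x y : hsub y x = hopp (hsub x y).
Proof. unfold hsub. rewrite hopp_add, hopp_hopp, hadd_comm. reflexivity. Qed.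

Lemma hadd_sub_l x y : hsub (hadd x y) x = y.
Proof. unfold hsub. rewrite (hadd_comm x y), <- hadd_assoc, hadd_opp, hadd_zero. reflexivity. Qed.

End Basic.

Lemma sqrt_lt_eps a e : 0 <= a -> 0 < e -> a < e * e -> sqrt a < e.
Proof.
  intros. rewrite <- (sqrt_square e) by lra. apply sqrt_lt_1_alt. lra.
Qed.

Lemma Rabs_le_inv a b : Rabs a <= b -> -b <= a /\ a <= b.
Proof. unfold Rabs; destruct (Rcase_abs a); intros; lra. Qed.

Lemma Rabs_lt_of a b : -b < a -> a < b -> Rabs a < b.
Proof. unfold Rabs; destruct (Rcase_abs a); intros; lra. Qed.

Lemma Rabs_small e : (forall eps, 0 < eps -> Rabs e < eps) -> e = 0.
Proof.
  intro H. destruct (Req_dec e 0); auto. exfalso.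
  specialize (H (Rabs e) (Rabs_pos_lt _ H0)). lra.
Qed.

Lemma nat_gt (A : R) : exists n : nat, A < INR n.
Proof.
  destruct (INR_archimed 1 A) as [n Hn]; [lra|]. exists n. lra.
Qed.

Lemma Cre_im_eq (a b : C) : Re a = Re b -> Im a = Im b -> a = b.
Proof. destruct a, b; unfold Re, Im; simpl; intros; subst; reflexivity. Qed.


Lemma small_mul (A eps : R) : 0 <= A -> 0 < eps -> exists eta, 0 < eta /\ A * eta < eps.
Proof.
  intros. exists (eps / (A + 1)). split. apply Rdiv_lt_0_compat; lra.
  unfold Rdiv. assert (A * / (A + 1) < 1).
  { apply Rmult_lt_reg_r with (A + 1). lra. rewrite Rmult_assoc, Rinv_l by lra. lra. }
  assert (0 < / (A + 1)) by (apply Rinv_0_lt_compat; lra). nra.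
Qed.

Lemma C_small (d : C) : (forall eps, 0 < eps -> Cmod d < eps) -> d = RtoC 0.
Proof.
  intro H. apply Cmod_eq_0. apply Rabs_small. intros. rewrite Rabs_pos_eq by apply Cmod_ge_0.
  auto.
Qed.

Lemma Cminus_eq0 (a b : C) : Cminus a b = RtoC 0 -> a = b.
Proof.
  destruct a, b. unfold Cminus, Cplus, Copp, RtoC; simpl. intro H. injection H; intros.
  f_equal; lra.
Qed.

Lemma hsub_add_add (X : CHilbert) (a b c d : X) :
  hadd (hsub a b) (hsub c d) = hsub (hadd a c) (hadd b d).
Proof.
  unfold hsub. rewrite hopp_add. rewrite <- !hadd_assoc. f_equal.
  rewrite !hadd_assoc. f_equal. apply hadd_comm.
Qed.

Lemma hsub_scal (X : CHilbert) (c : C) (a b : X) : hscal c (hsub a b) = hsub (hscal c a) (hscal c b).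
Proof. unfold hsub. rewrite hscal_distr_l, hscal_opp. reflexivity. Qed.

Lemma hsub_rel (X : CHilbert) (x y x1 y1 : X) : hadd y x = hadd y1 x1 ->
  hsub y y1 = hopp (hsub x x1).
Proof.
  intro E. apply hopp_unique. rewrite hsub_add_add, (hadd_comm x y), E.
  rewrite (hadd_comm x1 y1). apply hadd_opp.
Qed.

Lemma Cplus_opp_eq (a b : C) : Cplus a (Copp b) = RtoC 0 -> b = a.
Proof.
  destruct a, b. unfold Cplus, Copp, RtoC; simpl. intro H. injection H; intros.
  f_equal; lra.
Qed.

Lemma im_le_Cmod (c : C) : Rabs (Im c) <= Cmod c.
Proof. eapply Rle_trans. 2: apply Rmax_Cmod. apply Rmax_r. Qed.

Lemma div_nonneg (x y : R) : 0 <= x -> 0 < y -> 0 <= x / y.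
Proof. intros. apply Rmult_le_pos; auto. left; apply Rinv_0_lt_compat; auto. Qed.

Lemma hsub_sub_sub (X : CHilbert) (a b c : X) : hsub (hsub a c) (hsub b c) = hsub a b.
Proof.
  unfold hsub. rewrite hopp_add, hopp_hopp. rewrite <- hadd_assoc. f_equal.
  rewrite (hadd_comm (hopp b) c), hadd_assoc, hadd_opp_l, hadd_zero_l. reflexivity.
Qed.


Lemma quad_disc (a b c : R) : (forall t, 0 <= a + b * t + c * (t * t)) -> 0 <= c ->
  b * b <= 4 * a * c.
Proof.
  intros H Hc. destruct (Req_dec c 0) as [E|E].
  - subst c. destruct (Req_dec b 0) as [Eb|Eb]. subst; nra.
    exfalso. specialize (H (- (a + 1) / b)). 
    replace (a + b * (- (a + 1) / b) + 0 * (- (a + 1) / b * (- (a + 1) / b))) with (-1) in H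
      by (field; auto). lra.
  - specialize (H (- b / (2 * c))).
    assert (0 < c) by lra.
    replace (a + b * (- b / (2 * c)) + c * (- b / (2 * c) * (- b / (2 * c))))
      with ((4 * a * c - b * b) / (4 * c)) in H by (field; lra).
    apply Rmult_le_compat_r with (r := 4 * c) in H; [|lra].
    unfold Rdiv in H. rewrite Rmult_assoc, Rinv_l in H by lra. lra.
Qed.

Section IP.
Variable X : CHilbert.

Definition ip_space (S : X -> Prop) (ip : X -> X -> C) : Prop :=
  is_subspace S /\
  (forall x y z, S x -> S y -> S z -> ip (hadd x y) z = Cplus (ip x z) (ip y z)) /\
  (forall (c : C) x y, S x -> S y -> ip (hscal c x) y = Cmult c (ip x y)) /\
  (forall x y, S x -> S y -> ip y x = Cconj (ip x y)) /\
  (forall x, S x -> 0 <= Re (ip x x)) /\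
  (forall x, S x -> Re (ip x x) = 0 -> x = hzero).

Definition nrm (ip : X -> X -> C) (x : X) : R := sqrt (Re (ip x x)).

Definition ip_cvg (ip : X -> X -> C) (u : nat -> X) (l : X) : Prop :=
  forall eps, 0 < eps -> exists N, forall n, (N <= n)%nat -> nrm ip (hsub (u n) l) < eps.

Definition ip_complete (S : X -> Prop) (ip : X -> X -> C) : Prop :=
  forall u : nat -> X, (forall n, S (u n)) ->
    (forall eps, 0 < eps -> exists N, forall n k, (N <= n)%nat -> (N <= k)%nat ->
        nrm ip (hsub (u n) (u k)) < eps) ->
    exists l, S l /\ ip_cvg ip u l.

Variable S : X -> Prop.
Variable ip : X -> X -> C.
Hypothesis Hsp : ip_space S ip.

Lemma S0 : S hzero. Proof. apply Hsp. Qed.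
Lemma Sadd x y : S x -> S y -> S (hadd x y). Proof. apply Hsp. Qed.
Lemma Sscal c x : S x -> S (hscal c x). Proof. apply Hsp. Qed.
Lemma Sopp x : S x -> S (hopp x). Proof. intro. rewrite hopp_scal. apply Sscal; auto. Qed.
Lemma Ssub x y : S x -> S y -> S (hsub x y). Proof. intros. apply Sadd; auto. apply Sopp; auto. Qed.

Lemma ip_add_l x y z : S x -> S y -> S z -> ip (hadd x y) z = Cplus (ip x z) (ip y z).
Proof. apply Hsp. Qed.
Lemma ip_scal_l c x y : S x -> S y -> ip (hscal c x) y = Cmult c (ip x y).
Proof. apply Hsp. Qed.
Lemma ip_conj x y : S x -> S y -> ip y x = Cconj (ip x y).
Proof. apply Hsp. Qed.
Lemma ip_pos x : S x -> 0 <= Re (ip x x).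
Proof. apply Hsp. Qed.
Lemma ip_def x : S x -> Re (ip x x) = 0 -> x = hzero.
Proof. apply Hsp. Qed.

Lemma ip_add_r x y z : S x -> S y -> S z -> ip x (hadd y z) = Cplus (ip x y) (ip x z).
Proof.
  intros. rewrite ip_conj, ip_add_l, Cplus_conj by auto using Sadd.
  rewrite <- !ip_conj by auto. reflexivity.
Qed.
Lemma ip_scal_r c x y : S x -> S y -> ip x (hscal c y) = Cmult (Cconj c) (ip x y).
Proof.
  intros. rewrite ip_conj, ip_scal_l, Cmult_conj by auto using Sscal.
  rewrite <- !ip_conj by auto. reflexivity.
Qed.
Lemma ip_zero_l y : S y -> ip hzero y = RtoC 0.
Proof. intros. rewrite <- (hscal_zero _ hzero), ip_scal_l by auto using S0. ceq. Qed.
Lemma ip_zero_r y : S y -> ip y hzero = RtoC 0.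
Proof. intros. rewrite ip_conj, ip_zero_l by auto using S0. ceq. Qed.
Lemma ip_opp_l x y : S x -> S y -> ip (hopp x) y = Copp (ip x y).
Proof. intros. rewrite hopp_scal, ip_scal_l by auto. ceq. Qed.
Lemma ip_opp_r x y : S x -> S y -> ip x (hopp y) = Copp (ip x y).
Proof. intros. rewrite hopp_scal, ip_scal_r by auto. ceq. Qed.
Lemma ip_sub_l x y z : S x -> S y -> S z -> ip (hsub x y) z = Cminus (ip x z) (ip y z).
Proof. intros. unfold hsub. rewrite ip_add_l, ip_opp_l by auto using Sopp. ceq. Qed.
Lemma ip_sub_r x y z : S x -> S y -> S z -> ip z (hsub x y) = Cminus (ip z x) (ip z y).
Proof. intros. unfold hsub. rewrite ip_add_r, ip_opp_r by auto using Sopp. ceq. Qed.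

Lemma ip_im x : S x -> Im (ip x x) = 0.
Proof.
  intro Hx. pose proof (ip_conj x x Hx Hx) as H. destruct (ip x x) as [a b].
  unfold Cconj in H; simpl in *. injection H. lra.
Qed.

Lemma ip_re_sym x y : S x -> S y -> Re (ip y x) = Re (ip x y).
Proof. intros. rewrite ip_conj by auto. apply re_conj. Qed.

Lemma nrm_ge0 x : 0 <= nrm ip x.
Proof. apply sqrt_pos. Qed.

Lemma nrm_sq x : S x -> nrm ip x * nrm ip x = Re (ip x x).
Proof. intro. apply sqrt_sqrt, ip_pos; auto. Qed.

Lemma ip_expand x y (t : R) : S x -> S y ->
  Re (ip (hadd x (hscal (RtoC t) y)) (hadd x (hscal (RtoC t) y))) =
  Re (ip x x) + 2 * t * Re (ip y x) + t * t * Re (ip y y).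
Proof.
  intros Hx Hy.
  rewrite ip_add_l, !ip_add_r, !ip_scal_l, !ip_scal_r by auto using Sadd, Sscal.
  rewrite (ip_conj y x) by auto.
  destruct (ip x x) as [a1 a2], (ip x y) as [b1 b2], (ip y y) as [c1 c2].
  unfold Re, Cplus, Cmult, Cconj, RtoC; simpl. ring.
Qed.

Lemma CS_sq x y : S x -> S y ->
  Re (ip x y) * Re (ip x y) + Im (ip x y) * Im (ip x y) <= Re (ip x x) * Re (ip y y).
Proof.
  intros Hx Hy.
  set (c := ip x y).
  set (B := Re c * Re c + Im c * Im c).
  assert (Hq : forall t : R, 0 <= Re (ip x x) + (- 2 * B) * t + (B * Re (ip y y)) * (t * t)).
  { intro t. set (v := hsub x (hscal (Cmult (RtoC t) c) y)).
    assert (Sv : S v) by (apply Ssub; auto; apply Sscal; auto).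
    pose proof (ip_pos v Sv) as P. unfold v in P.
    rewrite ip_sub_l, !ip_sub_r, !ip_scal_l, !ip_scal_r in P by auto using Ssub, Sscal.
    rewrite (ip_conj x y) in P by auto. fold c in P.
    pose proof (ip_im y Hy) as Iy.
    unfold B. destruct c as [c1 c2]. destruct (ip x x) as [a1 a2]. destruct (ip y y) as [d1 d2].
    unfold Re, Im, Cplus, Cmult, Cconj, RtoC, Cminus, Copp in *; simpl in *. subst d2. nra. }
  pose proof (quad_disc _ _ _ Hq).
  assert (0 <= B) by (unfold B; nra).
  pose proof (ip_pos y Hy). pose proof (ip_pos x Hx).
  assert (0 <= B * Re (ip y y)) by nra.
  specialize (H H3).
  destruct (Req_dec B 0) as [E|E]. rewrite E. nra.
  assert (B * B <= B * (Re (ip x x) * Re (ip y y))) by nra.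
  apply Rmult_le_reg_l with B; lra.
Qed.

Lemma CS x y : S x -> S y -> Cmod (ip x y) <= nrm ip x * nrm ip y.
Proof.
  intros Hx Hy. unfold Cmod, nrm. rewrite <- sqrt_mult by (apply ip_pos; auto).
  apply sqrt_le_1_alt. pose proof (CS_sq x y Hx Hy). unfold Re, Im in *. lra.
Qed.

Lemma CS_re x y : S x -> S y -> Rabs (Re (ip x y)) <= nrm ip x * nrm ip y.
Proof. intros. eapply Rle_trans. apply re_le_Cmod. apply CS; auto. Qed.


Lemma nrm_sq' x : S x -> Re (ip x x) = nrm ip x * nrm ip x.
Proof. intro. symmetry. apply nrm_sq; auto. Qed.

Lemma nrm_tri x y : S x -> S y -> nrm ip (hadd x y) <= nrm ip x + nrm ip y.
Proof.
  intros Hx Hy.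
  pose proof (ip_expand x y 1 Hx Hy) as E. rewrite hscal_one in E.
  pose proof (CS_re y x Hy Hx). pose proof (nrm_ge0 x). pose proof (nrm_ge0 y).
  rewrite <- (sqrt_square (nrm ip x + nrm ip y)) by lra.
  unfold nrm at 1. apply sqrt_le_1_alt. rewrite E.
  rewrite (nrm_sq' x), (nrm_sq' y) by auto.
  apply Rabs_le_inv in H. nra.
Qed.

Lemma ip_opp_opp x : S x -> ip (hopp x) (hopp x) = ip x x.
Proof. intro. rewrite ip_opp_l, ip_opp_r by auto using Sopp. ceq. Qed.

Lemma nrm_opp x : S x -> nrm ip (hopp x) = nrm ip x.
Proof. intro. unfold nrm. rewrite ip_opp_opp; auto. Qed.

Lemma nrm_sub_sym x y : S x -> S y -> nrm ip (hsub x y) = nrm ip (hsub y x).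
Proof. intros. rewrite (hsub_opp _ x y), nrm_opp; auto using Ssub. Qed.

Lemma nrm_scal (c : C) x : S x -> nrm ip (hscal c x) = Cmod c * nrm ip x.
Proof.
  intro Hx. unfold nrm, Cmod. rewrite <- sqrt_mult.
  - f_equal. rewrite ip_scal_l, ip_scal_r by auto using Sscal.
    pose proof (ip_im x Hx). destruct c as [c1 c2]; destruct (ip x x) as [a1 a2].
    unfold Re, Im, Cmult, Cconj in *; simpl in *. subst a2. ring.
  - apply Rplus_le_le_0_compat; apply pow2_ge_0.
  - apply ip_pos; auto.
Qed.

Lemma nrm_zero x : S x -> nrm ip x = 0 -> x = hzero.
Proof.
  intros Hx H. apply ip_def; auto. unfold nrm in H.
  pose proof (ip_pos x Hx). apply sqrt_eq_0 in H; auto.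
Qed.

Lemma nrm_tri_sub x y z : S x -> S y -> S z ->
  nrm ip (hsub x z) <= nrm ip (hsub x y) + nrm ip (hsub y z).
Proof. intros. rewrite (hsub_split _ x y z). apply nrm_tri; auto using Ssub. Qed.

Lemma ip_cont_bound x y z : S x -> S y -> S z ->
  Cmod (Cminus (ip x z) (ip y z)) <= nrm ip (hsub x y) * nrm ip z.
Proof. intros. rewrite <- ip_sub_l by auto. apply CS; auto using Ssub. Qed.

Lemma parallelogram v w : S v -> S w ->
  Re (ip (hadd v w) (hadd v w)) + Re (ip (hsub v w) (hsub v w)) =
  2 * Re (ip v v) + 2 * Re (ip w w).
Proof.
  intros. rewrite ip_add_l, !ip_add_r, ip_sub_l, !ip_sub_r by auto using Sadd, Ssub.
  destruct (ip v v), (ip v w), (ip w v), (ip w w). unfold Re, Cplus, Cminus, Copp; simpl. ring.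
Qed.

Lemma ip_half v : S v -> Re (ip (hscal (RtoC (/2)) v) (hscal (RtoC (/2)) v)) = Re (ip v v) / 4.
Proof.
  intro. rewrite ip_scal_l, ip_scal_r by auto using Sscal.
  destruct (ip v v). unfold Re, Cmult, Cconj, RtoC; simpl. field.
Qed.

Section Riesz.
Hypothesis Hc : ip_complete S ip.
Variable l : X -> C.
Variable L : R.
Hypothesis l_add : forall x y, S x -> S y -> l (hadd x y) = Cplus (l x) (l y).
Hypothesis l_scal : forall c x, S x -> l (hscal c x) = Cmult c (l x).
Hypothesis l_bd : forall x, S x -> Cmod (l x) <= L * nrm ip x.

Let J v := Re (ip v v) / 2 - Re (l v).

Lemma J_low v : S v -> - (L * L) / 2 <= J v.
Proof.
  intro Hv. unfold J. rewrite nrm_sq' by auto.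
  pose proof (re_le_Cmod (l v)). pose proof (l_bd v Hv). apply Rabs_le_inv in H.
  pose proof (nrm_ge0 v). pose proof (Rle_0_sqr (nrm ip v - L)). unfold Rsqr in *. nra.
Qed.

Lemma J_expand v x t : S v -> S x ->
  J (hadd v (hscal (RtoC t) x)) = J v + t * (Re (ip x v) - Re (l x)) + (Re (ip x x) / 2) * (t * t).
Proof.
  intros. unfold J. rewrite ip_expand by auto. rewrite l_add, l_scal by auto using Sscal.
  destruct (l v), (l x). unfold Re, Cplus, Cmult, RtoC; simpl. field.
Qed.

Lemma J_par v w : S v -> S w ->
  Re (ip (hsub v w) (hsub v w)) = 4 * (J v + J w - 2 * J (hscal (RtoC (/2)) (hadd v w))).
Proof.
  intros. unfold J. rewrite ip_half by auto using Sadd.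
  rewrite l_scal, l_add by auto using Sadd.
  pose proof (parallelogram v w H H0).
  destruct (l v), (l w). unfold Re, Cplus, Cmult, RtoC in *; simpl in *. lra.
Qed.

Lemma riesz_re : exists r, S r /\ forall x, S x -> Re (ip x r) = Re (l x).
Proof.
  set (E := fun y => exists v, S v /\ y = - J v).
  assert (Eb : bound E).
  { exists (L * L / 2). intros y [v [Hv ->]]. pose proof (J_low v Hv). lra. }
  assert (Ene : exists y, E y) by (exists (- J hzero); exists hzero; split; auto using S0).
  destruct (completeness E Eb Ene) as [sg [Hub Hlub]].
  assert (Hge : forall v, S v -> - sg <= J v).
  { intros v Hv. assert (E (- J v)) by (exists v; auto). apply Hub in H. lra. }
  assert (Hex : forall n : nat, exists v, S v /\ J v < - sg + / (INR n + 1)).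
  { intro n. apply Classical_Prop.NNPP. intro Hn.
    assert (Hp : 0 < / (INR n + 1)) by (apply Rinv_0_lt_compat; pose proof (pos_INR n); lra).
    assert (is_upper_bound E (sg - / (INR n + 1))).
    { intros y [v [Hv ->]]. destruct (Rle_or_lt (- J v) (sg - / (INR n + 1))); auto.
      exfalso. apply Hn. exists v. split; auto. lra. }
    apply Hlub in H. lra. }
  apply functional_choice in Hex. destruct Hex as [vs Hvs].
  assert (Sv : forall n, S (vs n)) by (intro n; apply Hvs).
  assert (Hcau : forall n k, Re (ip (hsub (vs n) (vs k)) (hsub (vs n) (vs k))) <=
                              4 * (/ (INR n + 1) + / (INR k + 1))).
  { intros n k. rewrite J_par by auto.
    pose proof (Hge _ (Sscal (RtoC (/2)) _ (Sadd _ _ (Sv n) (Sv k)))).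
    destruct (Hvs n), (Hvs k). lra. }
  destruct (Hc vs Sv) as [r [Sr Hr]].
  { intros eps Heps. destruct (nat_gt (8 / (eps * eps))) as [N HN].
    exists N. intros n k Hn Hk. apply sqrt_lt_eps; auto. apply ip_pos; auto using Ssub.
    eapply Rle_lt_trans. apply Hcau.
    apply le_INR in Hn. apply le_INR in Hk. pose proof (pos_INR N).
    assert (/ (INR n + 1) <= / (INR N + 1)) by (apply Rinv_le_contravar; lra).
    assert (/ (INR k + 1) <= / (INR N + 1)) by (apply Rinv_le_contravar; lra).
    assert (H3 : 8 / (eps * eps) * (eps * eps) < (INR N + 1) * (eps * eps)) by
      (apply Rmult_lt_compat_r; nra).
    unfold Rdiv in H3. rewrite Rmult_assoc, Rinv_l in H3 by nra.
    assert (8 * / (INR N + 1) < eps * eps).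
    { apply Rmult_lt_reg_r with (INR N + 1). lra. rewrite Rmult_assoc, Rinv_l by lra. lra. }
    lra. }
  exists r. split; auto. intros x Hx.
  set (e := Re (ip x r) - Re (l x)).
  assert (Hg : forall n, (Re (ip x (vs n)) - Re (l x)) * (Re (ip x (vs n)) - Re (l x))
                          <= 2 * Re (ip x x) * / (INR n + 1)).
  { intro n. set (g := Re (ip x (vs n)) - Re (l x)).
    assert (H : forall t, 0 <= (J (vs n) + sg) + g * t + (Re (ip x x) / 2) * (t * t)).
    { intro t. pose proof (Hge _ (Sadd _ _ (Sv n) (Sscal (RtoC t) _ Hx))) as H.
      rewrite J_expand in H by auto. unfold g. lra. }
    pose proof (ip_pos x Hx).
    pose proof (quad_disc _ _ _ H) as Q. destruct (Hvs n) as [_ Hvn].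
    assert (K1 : 0 <= J (vs n) + sg) by (pose proof (Hge _ (Sv n)); lra).
    assert (K2 : J (vs n) + sg <= / (INR n + 1)) by lra.
    assert (K3 : 0 <= Re (ip x x) / 2) by lra. specialize (Q K3). nra. }
  cut (e = 0); [unfold e; lra|]. apply Rabs_small. intros eps Heps.
  pose proof (nrm_ge0 x).
  destruct (Hr (eps / (2 * (nrm ip x + 1)))) as [N1 HN1].
  { apply Rdiv_lt_0_compat; lra. }
  destruct (nat_gt (2 * Re (ip x x) / ((eps / 2) * (eps / 2)))) as [N2 HN2].
  set (n := max N1 N2).
  assert (HnN1 : (N1 <= n)%nat) by apply Nat.le_max_l.
  assert (HnN2 : (N2 <= n)%nat) by apply Nat.le_max_r.
  specialize (HN1 n HnN1). specialize (Hg n).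
  set (g := Re (ip x (vs n)) - Re (l x)) in Hg.
  assert (Hgs : Rabs g < eps / 2).
  { apply le_INR in HnN2. pose proof (pos_INR n).
    assert (2 * Re (ip x x) * / (INR n + 1) < (eps / 2) * (eps / 2)).
    { assert (2 * Re (ip x x) < (eps / 2) * (eps / 2) * (INR n + 1)).
      { assert (H2 : 2 * Re (ip x x) / ((eps / 2) * (eps / 2)) * ((eps / 2) * (eps / 2)) <
                (INR n + 1) * ((eps / 2) * (eps / 2))) by (apply Rmult_lt_compat_r; nra).
        unfold Rdiv at 1 in H2. rewrite Rmult_assoc, Rinv_l in H2 by nra. lra. }
      apply Rmult_lt_reg_r with (INR n + 1). lra. rewrite Rmult_assoc, Rinv_l by lra. lra. }
    apply Rabs_lt_of; nra. }
  assert (Hd : Rabs (e - g) <= nrm ip x * (eps / (2 * (nrm ip x + 1)))).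
  { unfold e, g. replace (Re (ip x r) - Re (l x) - (Re (ip x (vs n)) - Re (l x)))
      with (Re (Cminus (ip x r) (ip x (vs n)))) by (unfold Re, Cminus, Copp, Cplus; simpl; ring).
    rewrite <- ip_sub_r by auto. eapply Rle_trans. apply CS_re; auto using Ssub.
    apply Rmult_le_compat_l; auto. rewrite nrm_sub_sym by auto. lra. }
  assert (nrm ip x * (eps / (2 * (nrm ip x + 1))) < eps / 2).
  { unfold Rdiv. rewrite Rinv_mult.
    assert (nrm ip x * / (nrm ip x + 1) < 1).
    { apply Rmult_lt_reg_r with (nrm ip x + 1). lra. rewrite Rmult_assoc, Rinv_l by lra. lra. }
    assert (0 < / (nrm ip x + 1)) by (apply Rinv_0_lt_compat; lra). nra. }
  pose proof (Rabs_triang (e - g) g) as H3. replace (e - g + g) with e in H3 by ring. lra.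
Qed.

Lemma riesz : exists r, S r /\ forall x, S x -> ip x r = l x.
Proof.
  destruct riesz_re as [r [Sr Hr]]. exists r. split; auto. intros x Hx.
  apply Cre_im_eq. apply Hr; auto.
  pose proof (Hr (hscal Ci x) (Sscal _ _ Hx)).
  rewrite ip_scal_l, l_scal in H by auto.
  destruct (ip x r), (l x). unfold Re, Im, Cmult, Ci in *; simpl in *. lra.
Qed.

End Riesz.

End IP.

Section Sub.
Variable X : CHilbert.
Variable S : X -> Prop.
Variable ip : X -> X -> C.
Hypothesis Hsp : ip_space X S ip.

Definition closed_in (S' : X -> Prop) : Prop :=
  forall u l, (forall n, S' (u n)) -> S l -> ip_cvg X ip u l -> S' l.

Lemma ip_space_sub (S' : X -> Prop) : is_subspace S' -> (forall x, S' x -> S x) -> ip_space X S' ip.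
Proof.
  intros HS' Hsub. destruct Hsp as [_ [A1 [A2 [A3 [A4 A5]]]]].
  repeat split; try apply HS'; auto.
Qed.

Lemma cvg_cauchy u l : (forall n, S (u n)) -> S l -> ip_cvg X ip u l ->
  forall eps, 0 < eps -> exists N, forall n k, (N <= n)%nat -> (N <= k)%nat ->
        nrm X ip (hsub (u n) (u k)) < eps.
Proof.
  intros Su Sl H eps Heps. destruct (H (eps / 2)) as [N HN]. lra.
  exists N. intros n k Hn Hk. eapply Rle_lt_trans. apply (nrm_tri_sub X S ip Hsp _ l); auto.
  rewrite (nrm_sub_sym X S ip Hsp l) by auto. pose proof (HN n Hn). pose proof (HN k Hk). lra.
Qed.

Lemma complete_sub (S' : X -> Prop) : ip_complete X S ip -> (forall x, S' x -> S x) ->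
  closed_in S' -> ip_complete X S' ip.
Proof.
  intros Hc Hsub Hcl u Su Hcau. destruct (Hc u) as [l [Sl Hl]]; auto.
  exists l. split; auto. apply (Hcl u); auto.
Qed.

End Sub.

Section LM.
Variable X : CHilbert.
Variable S : X -> Prop.
Variable ip : X -> X -> C.
Hypothesis Hsp : ip_space X S ip.
Hypothesis Hc : ip_complete X S ip.
Variable s : X -> X -> C.
Variables M mu : R.
Hypothesis s_add_l : forall x y z, S x -> S y -> S z -> s (hadd x y) z = Cplus (s x z) (s y z).
Hypothesis s_scal_l : forall c x y, S x -> S y -> s (hscal c x) y = Cmult c (s x y).
Hypothesis s_add_r : forall x y z, S x -> S y -> S z -> s x (hadd y z) = Cplus (s x y) (s x z).
Hypothesis s_scal_r : forall c x y, S x -> S y -> s x (hscal c y) = Cmult (Cconj c) (s x y).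
Hypothesis s_bd : forall x y, S x -> S y -> Cmod (s x y) <= M * nrm X ip x * nrm X ip y.
Hypothesis mu_pos : 0 < mu.
Hypothesis M_nonneg : 0 <= M.
Hypothesis s_coer : forall x, S x -> mu * (nrm X ip x * nrm X ip x) <= Re (s x x).

Notation nr := (nrm X ip).

Lemma s_rep u : S u -> exists z, S z /\ forall v, S v -> ip z v = s u v.
Proof.
  intro Su.
  destruct (riesz X S ip Hsp Hc (fun v => Cconj (s u v)) (M * nr u)) as [r [Sr Hr]].
  - intros. rewrite s_add_r, Cplus_conj; auto.
  - intros. rewrite s_scal_r, Cmult_conj, Cconj_conj; auto.
  - intros. rewrite Cmod_conj. apply s_bd; auto.
  - exists r. split; auto. intros v Sv. rewrite (ip_conj X S ip Hsp), Hr, Cconj_conj; auto.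
Qed.

Lemma s_zero v : S v -> s hzero v = RtoC 0.
Proof.
  intro. rewrite <- (hscal_zero _ hzero), s_scal_l by auto using (S0 X S ip Hsp). ceq.
Qed.

Lemma lax_milgram (lf : X -> C) (K : R) :
  (forall x y, S x -> S y -> lf (hadd x y) = Cplus (lf x) (lf y)) ->
  (forall c x, S x -> lf (hscal c x) = Cmult (Cconj c) (lf x)) ->
  (forall x, S x -> Cmod (lf x) <= K * nr x) ->
  exists u, S u /\ forall v, S v -> s u v = lf v.
Proof.
  intros l_add l_scal l_bd.
  pose proof (S0 X S ip Hsp) as HS0.
  destruct (riesz X S ip Hsp Hc (fun v => Cconj (lf v)) K) as [f [Sf Hf]].
  - intros. rewrite l_add, Cplus_conj; auto.
  - intros. rewrite l_scal, Cmult_conj, Cconj_conj; auto.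
  - intros. rewrite Cmod_conj. apply l_bd; auto.
  - assert (Hf' : forall v, S v -> ip f v = lf v).
    { intros v Sv. rewrite (ip_conj X S ip Hsp), Hf, Cconj_conj; auto. }
    clear Hf.
    set (Rg := fun z => S z /\ exists u, S u /\ forall v, S v -> s u v = ip z v).
    assert (RgS : forall z, Rg z -> S z) by (intros z [H _]; exact H).
    assert (Rsub : is_subspace Rg).
    { split; [|split].
      - split; auto. exists hzero. split; auto. intros. rewrite s_zero, (ip_zero_l X S ip Hsp); auto.
      - intros x y [Sx [ux [Sux Hx]]] [Sy [uy [Suy Hy]]]. split. apply (Sadd X S ip Hsp); auto.
        exists (hadd ux uy). split. apply (Sadd X S ip Hsp); auto.
        intros. rewrite s_add_l, (ip_add_l X S ip Hsp), Hx, Hy; auto.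
      - intros c x [Sx [ux [Sux Hx]]]. split. apply (Sscal X S ip Hsp); auto.
        exists (hscal c ux). split. apply (Sscal X S ip Hsp); auto.
        intros. rewrite s_scal_l, (ip_scal_l X S ip Hsp), Hx; auto. }
    assert (Rsp : ip_space X Rg ip) by (apply (ip_space_sub X S ip Hsp); auto).
    assert (Rc : ip_complete X Rg ip).
    { eapply complete_sub; [exact Hc|exact RgS|].
      intros zs z Hzs Sz Hcv.
      assert (Ex : forall n, exists u, S u /\ forall v, S v -> s u v = ip (zs n) v)
        by (intro n; apply Hzs).
      apply functional_choice in Ex. destruct Ex as [us Hus].
      assert (Szs : forall n, S (zs n)) by (intro; apply RgS; auto).
      assert (Sus : forall n, S (us n)) by (intro; apply Hus).
      assert (Hd : forall n k, mu * nr (hsub (us n) (us k)) <= nr (hsub (zs n) (zs k))).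
      { intros n k. set (d := hsub (us n) (us k)).
        assert (Sd : S d) by (apply (Ssub X S ip Hsp); auto).
        pose proof (s_coer d Sd).
        assert (s d d = ip (hsub (zs n) (zs k)) d).
        { unfold d at 1. unfold hsub at 1. rewrite s_add_l, hopp_scal, s_scal_l by
            auto using (Sopp X S ip Hsp), (Sscal X S ip Hsp).
          rewrite (ip_sub_l X S ip Hsp), !(proj2 (Hus _)) by auto. ceq. }
        rewrite H0 in H.
        pose proof (CS_re X S ip Hsp (hsub (zs n) (zs k)) d (Ssub X S ip Hsp _ _ (Szs n) (Szs k)) Sd).
        apply Rabs_le_inv in H1. pose proof (nrm_ge0 X ip d).
        pose proof (nrm_ge0 X ip (hsub (zs n) (zs k))).
        destruct (Req_dec (nr d) 0) as [E|E]. rewrite E. lra.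
        apply Rmult_le_reg_r with (nr d). lra. nra. }
      destruct (Hc us Sus) as [u [Su Hu]].
      { intros eps Heps. destruct (cvg_cauchy X S ip Hsp zs z Szs Sz Hcv (mu * eps)) as [N HN].
        nra. exists N. intros n k Hn Hk. specialize (HN n k Hn Hk). specialize (Hd n k).
        apply Rmult_lt_reg_l with mu; lra. }
      split; auto. exists u. split; auto. intros v Sv.
      apply Cminus_eq0. apply C_small. intros eps Heps.
      pose proof (nrm_ge0 X ip v).
      destruct (small_mul (M * nr v) (eps / 2)) as [e1 [He1 He1']]; [nra|lra|].
      destruct (small_mul (nr v) (eps / 2)) as [e2 [He2 He2']]; auto; [lra|].
      destruct (Hu e1 He1) as [N1 HN1]. destruct (Hcv e2 He2) as [N2 HN2].
      set (n := max N1 N2).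
      specialize (HN1 n (Nat.le_max_l _ _)). specialize (HN2 n (Nat.le_max_r _ _)).
      replace (Cminus (s u v) (ip z v)) with
        (Cplus (Cminus (s u v) (s (us n) v)) (Cminus (ip (zs n) v) (ip z v))).
      2:{ rewrite (proj2 (Hus n)) by auto. ceq. }
      eapply Rle_lt_trans. apply Cmod_triangle.
      assert (Cmod (Cminus (s u v) (s (us n) v)) <= M * nr v * e1).
      { replace (Cminus (s u v) (s (us n) v)) with (s (hsub u (us n)) v).
        2:{ unfold hsub. rewrite s_add_l, hopp_scal, s_scal_l by
            auto using (Sopp X S ip Hsp), (Sscal X S ip Hsp). ceq. }
        eapply Rle_trans. apply s_bd; auto. apply (Ssub X S ip Hsp); auto.
        rewrite (nrm_sub_sym X S ip Hsp) by auto.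
        assert (0 <= M * nr v) by nra. nra. }
      assert (Cmod (Cminus (ip (zs n) v) (ip z v)) <= nr v * e2).
      { eapply Rle_trans. apply (ip_cont_bound X S ip Hsp); auto. nra. }
      lra. }
    destruct (riesz X Rg ip Rsp Rc (fun z => ip z f) (nr f)) as [p [Rp Hp]].
    + intros. apply (ip_add_l X S ip Hsp); auto.
    + intros. apply (ip_scal_l X S ip Hsp); auto.
    + intros. rewrite Rmult_comm. apply (CS X S ip Hsp); auto.
    + set (w := hsub f p).
      assert (Sw : S w) by (apply (Ssub X S ip Hsp); auto).
      destruct (s_rep w Sw) as [zw [Szw Hzw]].
      assert (Rzw : Rg zw) by (split; auto; exists w; split; auto; intros; symmetry; auto).
      specialize (Hp zw Rzw).
      assert (E0 : s w w = RtoC 0).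
      { rewrite <- Hzw by auto. unfold w. rewrite (ip_sub_r X S ip Hsp), Hp by auto. ceq. }
      pose proof (s_coer w Sw) as H. rewrite E0 in H. unfold Re, RtoC in H; simpl in H.
      assert (H0 : nr w = 0).
      { pose proof (nrm_ge0 X ip w). assert (nr w * nr w <= 0).
        { apply Rmult_le_reg_l with mu; lra. }
        nra. }
      apply (nrm_zero X S ip Hsp) in H0; auto.
      assert (f = p) by (apply hsub_eq; auto).
      destruct Rp as [_ [u [Su Hu]]]. exists u. split; auto. intros v Sv.
      rewrite Hu, <- H1, Hf'; auto.
Qed.
End LM.


Lemma hinner_zero_eq (X : CHilbert) (x : X) : Re (hinner x x) = 0 -> x = hzero.
Proof.
  intro H. apply hinner_def. apply Cre_im_eq. rewrite H; reflexivity.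
  rewrite hinner_im. reflexivity.
Qed.

Lemma Hspace (X : CHilbert) : ip_space X (fun _ => True) hinner.
Proof.
  repeat split; intros; auto using hinner_add_l, hinner_scal_l, hinner_conj, hinner_pos, hinner_zero_eq.
Qed.

Lemma Hcompl (X : CHilbert) : ip_complete X (fun _ => True) hinner.
Proof.
  intros u _ Hu. destruct (hcomplete u Hu) as [l Hl]. exists l. split; auto.
Qed.

Lemma hnorm_nrm (X : CHilbert) (x : X) : hnorm x = nrm X hinner x.
Proof. reflexivity. Qed.

Lemma CS_h (X : CHilbert) (x y : X) : Cmod (hinner x y) <= hnorm x * hnorm y.
Proof. apply (CS X _ _ (Hspace X)); auto. Qed.

Lemma hnorm_ge0 (X : CHilbert) (x : X) : 0 <= hnorm x.
Proof. apply sqrt_pos. Qed.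

Lemma hnorm_sq (X : CHilbert) (x : X) : Re (hinner x x) = hnorm x * hnorm x.
Proof. symmetry. apply sqrt_sqrt. apply hinner_pos. Qed.

Section Op.
Variables X Y : CHilbert.
Variable dT : X -> Prop.
Variable T : X -> Y.
Hypothesis HT : densely_defined_closed dT T.

Lemma dT_sub : is_subspace dT. Proof. apply HT. Qed.
Lemma dT0 : dT hzero. Proof. apply HT. Qed.
Lemma dTadd x y : dT x -> dT y -> dT (hadd x y). Proof. apply HT. Qed.
Lemma dTscal c x : dT x -> dT (hscal c x). Proof. apply HT. Qed.
Lemma dTopp x : dT x -> dT (hopp x). Proof. rewrite hopp_scal. apply dTscal. Qed.
Lemma dTsub x y : dT x -> dT y -> dT (hsub x y). Proof. intros; apply dTadd; auto using dTopp. Qed.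

Lemma T_add x y : dT x -> dT y -> T (hadd x y) = hadd (T x) (T y).
Proof. apply HT. Qed.
Lemma T_scal c x : dT x -> T (hscal c x) = hscal c (T x).
Proof. apply HT. Qed.
Lemma T_zero : T hzero = hzero.
Proof. rewrite <- (hscal_zero _ hzero), T_scal by apply dT0. apply hscal_zero. Qed.
Lemma T_opp x : dT x -> T (hopp x) = hopp (T x).
Proof. intro. rewrite !hopp_scal. apply T_scal; auto. Qed.
Lemma T_sub x y : dT x -> dT y -> T (hsub x y) = hsub (T x) (T y).
Proof. intros. unfold hsub. rewrite T_add, T_opp; auto using dTopp. Qed.

Lemma gi_space : ip_space X dT (graph_inner T).
Proof.
  unfold graph_inner. split; [apply dT_sub|]. split; [|split; [|split; [|split]]].
  - intros. rewrite T_add, hinner_add_l, hinner_add_l by auto. ceq.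
  - intros. rewrite T_scal, !hinner_scal_l by auto. ceq.
  - intros. rewrite (hinner_conj x y), (hinner_conj (T x) (T y)). ceq.
  - intros. pose proof (hinner_pos x). pose proof (hinner_pos (T x)).
    unfold Re, Cplus in *; simpl in *. lra.
  - intros. pose proof (hinner_pos x). pose proof (hinner_pos (T x)).
    unfold Re, Cplus in *; simpl in *. apply hinner_zero_eq. unfold Re. lra.
Qed.

Lemma gn_sq x : Re (graph_inner T x x) = hnorm x * hnorm x + hnorm (T x) * hnorm (T x).
Proof. unfold graph_inner. rewrite <- !hnorm_sq. unfold Re, Cplus; simpl. ring. Qed.

Lemma hnorm_le_gn x : hnorm x <= graph_norm T x.
Proof.
  unfold graph_norm. rewrite gn_sq. rewrite <- (sqrt_square (hnorm x)) at 1 by apply hnorm_ge0.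
  apply sqrt_le_1_alt. pose proof (Rle_0_sqr (hnorm (T x))). unfold Rsqr in H. lra.
Qed.

Lemma hnorm_T_le_gn x : hnorm (T x) <= graph_norm T x.
Proof.
  unfold graph_norm. rewrite gn_sq. rewrite <- (sqrt_square (hnorm (T x))) at 1 by apply hnorm_ge0.
  apply sqrt_le_1_alt. pose proof (Rle_0_sqr (hnorm x)). unfold Rsqr in H. lra.
Qed.

Lemma gn_le x : graph_norm T x <= hnorm x + hnorm (T x).
Proof.
  unfold graph_norm. rewrite gn_sq. pose proof (hnorm_ge0 _ x). pose proof (hnorm_ge0 _ (T x)).
  rewrite <- (sqrt_square (hnorm x + hnorm (T x))) by lra.
  apply sqrt_le_1_alt. nra.
Qed.

Lemma gi_complete : ip_complete X dT (graph_inner T).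
Proof.
  intros u Su Hu.
  destruct (hcomplete u) as [x Hx].
  { intros eps Heps. destruct (Hu eps Heps) as [N HN]. exists N. intros.
    eapply Rle_lt_trans. apply (hnorm_le_gn (hsub (u n) (u k))). apply HN; auto. }
  destruct (hcomplete (fun n => T (u n))) as [y Hy].
  { intros eps Heps. destruct (Hu eps Heps) as [N HN]. exists N. intros.
    eapply Rle_lt_trans. 2: apply (HN n k); auto.
    fold (hsub (T (u n)) (T (u k))). rewrite <- T_sub by auto. apply hnorm_T_le_gn. }
  destruct HT as [_ [_ [_ Hcl]]].
  destruct (Hcl u x y Su Hx Hy) as [Dx Tx].
  exists x. split; auto. intros eps Heps.
  destruct (Hx (eps/2)) as [N1 HN1]; [lra|]. destruct (Hy (eps/2)) as [N2 HN2]; [lra|].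
  exists (max N1 N2). intros n Hn.
  specialize (HN1 n ltac:(lia)). specialize (HN2 n ltac:(lia)).
  change (nrm X (graph_inner T) (hsub (u n) x)) with (graph_norm T (hsub (u n) x)).
  eapply Rle_lt_trans. apply gn_le. rewrite T_sub, Tx by auto.
  unfold hnorm, hsub. lra.
Qed.

Lemma biadj x y :
  (forall z w, adj_rel dT T z w -> hinner w x = hinner z y) -> dT x /\ T x = y.
Proof.
  intro Hyp.
  destruct (riesz X dT (graph_inner T) gi_space gi_complete
              (fun v => Cplus (hinner v x) (hinner (T v) y)) (hnorm x + hnorm y)) as [x0 [D0 H0]].
  - intros. rewrite T_add, !hinner_add_l by auto. ceq.
  - intros. rewrite T_scal, !hinner_scal_l by auto. ceq.
  - intros v Dv. eapply Rle_trans. apply Cmod_triangle.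
    pose proof (CS_h _ v x). pose proof (CS_h _ (T v) y).
    pose proof (hnorm_le_gn v). pose proof (hnorm_T_le_gn v).
    pose proof (hnorm_ge0 _ x). pose proof (hnorm_ge0 _ y). pose proof (hnorm_ge0 _ v).
    pose proof (hnorm_ge0 _ (T v)).
    change (nrm X (graph_inner T) v) with (graph_norm T v). nra.
  - set (z := hsub y (T x0)). set (w := hopp (hsub x x0)).
    assert (Hadj : adj_rel dT T z w).
    { intros v Dv. specialize (H0 v Dv). unfold graph_inner in H0.
      unfold z, w. rewrite hinner_sub_r, hinner_opp_r, hinner_sub_r.
      revert H0. generalize (hinner v x0) (hinner (T v) (T x0)) (hinner v x) (hinner (T v) y).
      intros a b c d H. apply Cminus_eq0.
      transitivity (Cminus (Cplus c d) (Cplus a b)). ring. rewrite H. ring. }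
    pose proof (Hyp z w Hadj) as E1.
    pose proof (Hadj x0 D0) as E2.
    assert (Hzz : Cplus (hinner z z) (hinner (hsub x x0) (hsub x x0)) = RtoC 0).
    { assert (hinner z z = Cminus (hinner z y) (hinner z (T x0))) by (unfold z at 2; apply hinner_sub_r).
      rewrite H. rewrite <- E1. rewrite (hinner_conj z (T x0)) in E2.
      replace (hinner z (T x0)) with (Cconj (hinner x0 w)).
      2:{ rewrite <- E2, Cconj_conj. reflexivity. }
      rewrite <- hinner_conj. unfold w. rewrite !hinner_opp_l, hinner_sub_r. ceq. }
    pose proof (hinner_pos z). pose proof (hinner_pos (hsub x x0)).
    assert (K : Re (hinner z z) = 0 /\ Re (hinner (hsub x x0) (hsub x x0)) = 0).
    { apply (f_equal Re) in Hzz. unfold Re, Cplus, RtoC in *; simpl in *. lra. }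
    destruct K as [K1 K2]. apply hinner_zero_eq in K1. apply hinner_zero_eq in K2.
    apply hsub_eq in K2. apply hsub_eq in K1. subst. auto.
Qed.

End Op.

Section Rel.
Variable Z : CHilbert.
Variable T : Z -> Z -> Prop.
Hypothesis Tlin : linear_rel T.
Hypothesis Tsv : single_valued T.
Hypothesis Tsurj : forall f, exists x y, T x y /\ hadd y x = f.

Lemma rel_dense : (forall x y, T x y -> 0 <= Re (hinner y x)) -> dense_set (fun x => exists y, T x y).
Proof.
  intro Hacc.
  set (Cl := fun x : Z => forall eps, 0 < eps -> exists s, (exists y, T s y) /\ hnorm (hsub x s) < eps).
  pose proof (Hspace Z) as HZ.
  assert (Clsub : is_subspace Cl).
  { split; [|split].
    - intros eps Heps. exists hzero. split. exists hzero. apply Tlin.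
      rewrite hsub_diag. unfold hnorm. rewrite hinner_zero_l. simpl. rewrite sqrt_0. auto.
    - intros x y Hx Hy eps Heps. destruct (Hx (eps/2)) as [s [[ys Hs] Hxs]]; [lra|].
      destruct (Hy (eps/2)) as [t [[yt Ht] Hyt]]; [lra|].
      exists (hadd s t). split. exists (hadd ys yt). apply Tlin; auto.
      replace (hsub (hadd x y) (hadd s t)) with (hadd (hsub x s) (hsub y t)).
      2:{ unfold hsub. rewrite hopp_add. rewrite <- !hadd_assoc. f_equal.
          rewrite !hadd_assoc. f_equal. apply hadd_comm. }
      eapply Rle_lt_trans. apply (nrm_tri Z _ _ HZ); auto. unfold hnorm, nrm in *. lra.
    - intros c x Hx eps Heps.
      destruct (small_mul (Cmod c) eps (Cmod_ge_0 c) Heps) as [e [He He']].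
      destruct (Hx e He) as [s [[ys Hs] Hxs]].
      exists (hscal c s). split. exists (hscal c ys). apply Tlin; auto.
      replace (hsub (hscal c x) (hscal c s)) with (hscal c (hsub x s)).
      2:{ unfold hsub. rewrite hscal_distr_l, hscal_opp. reflexivity. }
      change (hnorm (hscal c (hsub x s))) with (nrm Z hinner (hscal c (hsub x s))).
      rewrite (nrm_scal Z _ _ HZ) by auto. pose proof (Cmod_ge_0 c).
      pose proof (hnorm_ge0 _ (hsub x s)). unfold hnorm, nrm in *. nra. }
  assert (Clsp : ip_space Z Cl hinner) by (apply (ip_space_sub Z _ _ HZ); auto).
  assert (Clc : ip_complete Z Cl hinner).
  { apply (complete_sub Z (fun _ => True) hinner Cl (Hcompl Z)); [intros; exact I|].
    intros u l Hu _ Hcv eps Heps. destruct (Hcv (eps/2)) as [N HN]; [lra|].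
    destruct (Hu N (eps/2)) as [s [Hs Hus]]; [lra|]. exists s. split; auto.
    eapply Rle_lt_trans. apply (nrm_tri_sub Z _ _ HZ _ (u N)); auto.
    rewrite (nrm_sub_sym Z _ _ HZ) by auto. specialize (HN N (le_n _)). unfold hnorm, nrm in *. lra. }
  intros h eps Heps.
  destruct (riesz Z Cl hinner Clsp Clc (fun x => hinner x h) (hnorm h)) as [p [Cp Hp]].
  - intros. apply hinner_add_l.
  - intros. apply hinner_scal_l.
  - intros. rewrite Rmult_comm. apply CS_h.
  - set (d := hsub h p).
    destruct (Tsurj d) as [x [y [Txy Hd]]].
    assert (Cx : Cl x).
    { intros e He. exists x. split. exists y; auto. rewrite hsub_diag. unfold hnorm.
      rewrite hinner_zero_l. simpl. rewrite sqrt_0. auto. }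
    assert (E : hinner x d = RtoC 0).
    { unfold d. rewrite hinner_sub_r, Hp by auto. ceq. }
    rewrite <- Hd, hinner_add_r in E.
    pose proof (Hacc x y Txy). rewrite hinner_conj in H.
    pose proof (hinner_pos x).
    assert (Re (hinner x x) = 0).
    { apply (f_equal Re) in E. rewrite re_conj in H. unfold Re, Cplus, RtoC in *; simpl in *. lra. }
    apply hinner_zero_eq in H1. subst x.
    assert (y = hzero) by (apply (Tsv hzero); auto; apply Tlin).
    subst y. rewrite hadd_zero in Hd. symmetry in Hd. unfold d in Hd. apply hsub_eq in Hd. subst p.
    apply Cp; auto.
Qed.

Lemma rel_selfadj : (forall x y x' y', T x y -> T x' y' -> hinner y' x = hinner x' y) ->
  forall x y, (forall x' y', T x' y' -> hinner y' x = hinner x' y) -> T x y.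
Proof.
  intros Hsym x y Hxy.
  destruct (Tsurj (hadd y x)) as [x1 [y1 [T1 E1]]].
  set (d := hsub x x1).
  assert (Ey : hsub y y1 = hopp d).
  { unfold d. apply hsub_rel. auto. }
  assert (Hd : forall x' y', T x' y' -> hinner (hadd y' x') d = RtoC 0).
  { intros x' y' T'. unfold d. rewrite hinner_add_l, !hinner_sub_r.
    rewrite (Hxy x' y' T'), (Hsym x1 y1 x' y' T1 T').
    replace (Cminus (hinner x' y) (hinner x' y1)) with (hinner x' (hsub y y1)) by apply hinner_sub_r.
    rewrite Ey, hinner_opp_r. unfold d. rewrite hinner_sub_r. ceq. }
  destruct (Tsurj d) as [x2 [y2 [T2 E2]]].
  specialize (Hd x2 y2 T2). rewrite E2 in Hd.
  assert (H : d = hzero) by (apply hinner_zero_eq; rewrite Hd; reflexivity).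
  unfold d in H. apply hsub_eq in H. subst x1.
  unfold d in Ey. rewrite hsub_diag, hopp_zero in Ey. apply hsub_eq in Ey. subst. auto.
Qed.

End Rel.


Section Main.
Variables (H0 H1 H : CHilbert) (domG : H0 -> Prop) (G : H0 -> H1) (domD : H1 -> Prop) (D : H1 -> H0)
  (kappa : H0 -> H) (a : H1 -> H1) (m : H0 -> H0).
Hypothesis HG : densely_defined_closed domG G.
Hypothesis HD : densely_defined_closed domD D.
Hypothesis Hsub : minus_adj_sub H0 H1 domG G domD D.

Notation W := (dom_Gring H0 H1 domD D).
Notation V := (BD_G H0 H1 domG G domD D).
Notation VD := (BD_D H0 H1 domG G domD D).
Notation gi := (graph_inner G).
Notation giD := (graph_inner D).

Lemma adj_G x w : adj_rel domD D x w -> domG x /\ G x = hopp w.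
Proof.
  intro Hx. apply (biadj H0 H1 domG G HG). intros z zz Hz.
  destruct (Hsub z zz Hz) as [Dz Ez].
  pose proof (Hx z Dz) as E. rewrite Ez, hinner_opp_l in E.
  rewrite hinner_opp_r, <- E. ceq.
Qed.

Lemma W_domG x : W x -> domG x.
Proof. intros [w Hw]. apply (adj_G x w Hw). Qed.

Lemma V_D u : V u -> domD (G u) /\ D (G u) = u.
Proof.
  intros [Du Hu]. apply (biadj H1 H0 domD D HD). intros z zz Hz.
  assert (Wz : W z) by (exists zz; auto).
  destruct (adj_G z zz Hz) as [Dz Gz].
  specialize (Hu z Wz). unfold graph_inner in Hu. rewrite Gz, hinner_opp_r in Hu.
  rewrite (hinner_conj (G u) zz), (hinner_conj u z). f_equal.
  apply Cplus_opp_eq; auto.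
Qed.

Lemma VD_G y : VD y -> domG (D y) /\ G (D y) = y.
Proof.
  intros [Dy Hy]. apply (biadj H0 H1 domG G HG). intros z zz Hz.
  assert (Wz : dom_Dring H0 H1 domG G z) by (exists zz; auto).
  destruct (Hsub z zz Hz) as [Dz Ez].
  specialize (Hy z Wz). unfold graph_inner in Hy. rewrite Ez, hinner_opp_r in Hy.
  rewrite (hinner_conj (D y) zz), (hinner_conj y z). f_equal.
  apply Cplus_opp_eq; auto.
Qed.

Lemma V_VD u : V u -> VD (G u).
Proof.
  intro Vu. destruct (V_D u Vu) as [DGu EGu]. split; auto.
  intros v [zz Hv]. destruct (Hsub v zz Hv) as [Dv Ev].
  unfold graph_inner. rewrite EGu, Ev, hinner_opp_r. rewrite (Hv u (proj1 Vu)). ceq.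
Qed.

Lemma VD_V y : VD y -> V (D y).
Proof.
  intro Vy. destruct (VD_G y Vy) as [DDy EDy]. split; auto.
  intros v [w Hv]. destruct (adj_G v w Hv) as [Gv Ev].
  unfold graph_inner. rewrite EDy, Ev, hinner_opp_r. rewrite (Hv y (proj1 Vy)). ceq.
Qed.

Lemma V_iso u v : V u -> V v -> giD (G u) (G v) = gi u v.
Proof.
  intros Vu Vv. unfold graph_inner. rewrite (proj2 (V_D u Vu)), (proj2 (V_D v Vv)). ceq.
Qed.

Lemma SG : ip_space H0 domG gi. Proof. apply gi_space; auto. Qed.
Lemma SGc : ip_complete H0 domG gi. Proof. apply gi_complete; auto. Qed.
Lemma SD : ip_space H1 domD giD. Proof. apply gi_space; auto. Qed.

Lemma adj_sub (X Y : CHilbert) (dT : X -> Prop) (T : X -> Y) : is_subspace (dom_adj dT T).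
Proof.
  split; [|split].
  - exists hzero. intros v _. rewrite hinner_zero_r, hinner_zero_r. reflexivity.
  - intros x y [w1 H1'] [w2 H2']. exists (hadd w1 w2). intros v Dv.
    rewrite !hinner_add_r, H1', H2' by auto. reflexivity.
  - intros c x [w Hw]. exists (hscal c w). intros v Dv. rewrite !hinner_scal_r, Hw; auto.
Qed.

Lemma W_sub : is_subspace W. Proof. apply adj_sub. Qed.

Lemma V_sub : is_subspace V.
Proof.
  pose proof SG as S.
  split; [|split].
  - split. apply (S0 _ _ _ S). intros v Wv. apply (ip_zero_l _ _ _ S). apply W_domG; auto.
  - intros x y [Dx Hx] [Dy Hy]. split. apply (Sadd _ _ _ S); auto.
    intros v Wv. rewrite (ip_add_l _ _ _ S), Hx, Hy by auto using W_domG. ceq.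
  - intros c x [Dx Hx]. split. apply (Sscal _ _ _ S); auto.
    intros v Wv. rewrite (ip_scal_l _ _ _ S), Hx by auto using W_domG. ceq.
Qed.

Lemma VD_sub : is_subspace VD.
Proof.
  pose proof SD as S.
  assert (Hs : forall v, dom_Dring H0 H1 domG G v -> domD v).
  { intros v [zz Hv]. apply (Hsub v zz Hv). }
  split; [|split].
  - split. apply (S0 _ _ _ S). intros v Wv. apply (ip_zero_l _ _ _ S). auto.
  - intros x y [Dx Hx] [Dy Hy]. split. apply (Sadd _ _ _ S); auto.
    intros v Wv. rewrite (ip_add_l _ _ _ S), Hx, Hy by auto. ceq.
  - intros c x [Dx Hx]. split. apply (Sscal _ _ _ S); auto.
    intros v Wv. rewrite (ip_scal_l _ _ _ S), Hx by auto. ceq.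
Qed.

Lemma SW : ip_space H0 W gi.
Proof. apply (ip_space_sub _ _ _ SG). apply W_sub. apply W_domG. Qed.

Lemma SV : ip_space H0 V gi.
Proof. apply (ip_space_sub _ _ _ SG). apply V_sub. intros u Vu; apply Vu. Qed.

Lemma SWc : ip_complete H0 W gi.
Proof.
  apply (complete_sub _ _ _ _ SGc). apply W_domG.
  intros u l Hu Dl Hcv. exists (hopp (G l)). intros y Dy.
  apply Cminus_eq0. apply C_small. intros eps Heps.
  pose proof (hnorm_ge0 _ (D y)). pose proof (hnorm_ge0 _ y).
  destruct (small_mul (hnorm (D y) + hnorm y) eps) as [e [He He']]; [lra|auto|].
  destruct (Hcv e He) as [N HN]. specialize (HN N (le_n _)).
  destruct (Hu N) as [wN HwN]. destruct (adj_G _ _ HwN) as [DuN GuN].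
  pose proof (HwN y Dy) as EN.
  assert (wN = hopp (G (u N))) by (rewrite GuN, hopp_hopp; auto).
  subst wN. clear GuN.
  replace (Cminus (hinner (D y) l) (hinner y (hopp (G l)))) with
    (Cplus (hinner (D y) (hsub l (u N))) (hinner y (G (hsub l (u N))))).
  2:{ rewrite (T_sub _ _ domG G HG) by auto. rewrite !hinner_sub_r, hinner_opp_r.
      rewrite EN, hinner_opp_r. ceq. }
  eapply Rle_lt_trans. apply Cmod_triangle.
  pose proof (CS_h _ (D y) (hsub l (u N))). pose proof (CS_h _ y (G (hsub l (u N)))).
  assert (Hgn : graph_norm G (hsub l (u N)) < e).
  { change (graph_norm G (hsub l (u N))) with (nrm H0 gi (hsub l (u N))).
    rewrite (nrm_sub_sym _ _ _ SG) by auto. auto. }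
  pose proof (hnorm_le_gn _ _ G (hsub l (u N))).
  pose proof (hnorm_T_le_gn _ _ G (hsub l (u N))).
  pose proof (hnorm_ge0 _ (hsub l (u N))). pose proof (hnorm_ge0 _ (G (hsub l (u N)))).
  assert (hnorm (D y) * hnorm (hsub l (u N)) <= hnorm (D y) * e) by nra.
  assert (hnorm y * hnorm (G (hsub l (u N))) <= hnorm y * e) by nra.
  lra.
Qed.

Lemma SVc : ip_complete H0 V gi.
Proof.
  apply (complete_sub _ _ _ _ SGc). intros u Vu; apply Vu.
  intros u l Hu Dl Hcv. split; auto. intros v Wv.
  apply C_small. intros eps Heps.
  pose proof (nrm_ge0 _ gi v).
  destruct (small_mul (nrm H0 gi v) eps) as [e [He He']]; auto.
  destruct (Hcv e He) as [N HN]. specialize (HN N (le_n _)).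
  destruct (Hu N) as [DuN HuN].
  replace (gi l v) with (Cminus (gi l v) (gi (u N) v)) by (rewrite HuN by auto; ceq).
  eapply Rle_lt_trans. apply (ip_cont_bound _ _ _ SG); auto using W_domG.
  rewrite (nrm_sub_sym _ _ _ SG) by auto.
  pose proof (nrm_ge0 _ gi (hsub (u N) l)). nra.
Qed.


Hypothesis Ha : bounded_linear a.
Hypothesis Hac : coercive a.
Hypothesis Hm : bounded_linear m.
Hypothesis Hmc : coercive m.

Lemma a_add x y : a (hadd x y) = hadd (a x) (a y). Proof. apply Ha; auto. Qed.
Lemma a_scal c x : a (hscal c x) = hscal c (a x). Proof. apply Ha; auto. Qed.
Lemma m_add x y : m (hadd x y) = hadd (m x) (m y). Proof. apply Hm; auto. Qed.
Lemma m_scal c x : m (hscal c x) = hscal c (m x). Proof. apply Hm; auto. Qed.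

Lemma bl_bd (X : CHilbert) (T : X -> X) : bounded_linear T ->
  exists M, 0 <= M /\ forall x, hnorm (T x) <= M * hnorm x.
Proof.
  intros [_ [c Hc]]. exists (Rmax c 0). split. apply Rmax_r.
  intro x. eapply Rle_trans. apply Hc. apply Rmult_le_compat_r. apply hnorm_ge0. apply Rmax_l.
Qed.

Definition sf u v := Cplus (hinner (a (G u)) (G v)) (hinner (m u) v).

Notation GS := (T_sub _ _ domG G HG).
Notation GA := (T_add _ _ domG G HG).
Notation GSc := (T_scal _ _ domG G HG).

Lemma sf_add_l x y z : domG x -> domG y -> sf (hadd x y) z = Cplus (sf x z) (sf y z).
Proof. intros. unfold sf. rewrite GA, a_add, m_add, !hinner_add_l by auto. ring. Qed.
Lemma sf_scal_l c x y : domG x -> sf (hscal c x) y = Cmult c (sf x y).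
Proof. intros. unfold sf. rewrite GSc, a_scal, m_scal, !hinner_scal_l by auto. ring. Qed.
Lemma sf_add_r x y z : domG y -> domG z -> sf x (hadd y z) = Cplus (sf x y) (sf x z).
Proof. intros. unfold sf. rewrite GA, !hinner_add_r by auto. ring. Qed.
Lemma sf_scal_r c x y : domG y -> sf x (hscal c y) = Cmult (Cconj c) (sf x y).
Proof. intros. unfold sf. rewrite GSc, !hinner_scal_r by auto. ring. Qed.
Lemma sf_sub_l x y z : domG x -> domG y -> sf (hsub x y) z = Cminus (sf x z) (sf y z).
Proof.
  intros. unfold hsub. rewrite sf_add_l, hopp_scal, sf_scal_l; auto.
  ceq. rewrite hopp_scal. apply (dTscal _ _ _ _ HG); auto.
Qed.
Lemma sf_sub_r x y z : domG y -> domG z -> sf x (hsub y z) = Cminus (sf x y) (sf x z).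
Proof.
  intros. unfold hsub. rewrite sf_add_r, hopp_scal, sf_scal_r; auto.
  ceq. apply (dTopp _ _ _ _ HG); auto.
Qed.

Lemma sf_bd : exists M, 0 <= M /\ forall x y, domG x -> domG y ->
  Cmod (sf x y) <= M * nrm H0 gi x * nrm H0 gi y.
Proof.
  destruct (bl_bd _ a Ha) as [Ma [Ma0 HMa]]. destruct (bl_bd _ m Hm) as [Mm [Mm0 HMm]].
  exists (Ma + Mm). split. lra. intros x y Dx Dy. unfold sf.
  eapply Rle_trans. apply Cmod_triangle.
  pose proof (CS_h _ (a (G x)) (G y)). pose proof (CS_h _ (m x) y).
  pose proof (HMa (G x)). pose proof (HMm x).
  change (nrm H0 gi x) with (graph_norm G x). change (nrm H0 gi y) with (graph_norm G y).
  pose proof (hnorm_le_gn _ _ G x). pose proof (hnorm_T_le_gn _ _ G x).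
  pose proof (hnorm_le_gn _ _ G y). pose proof (hnorm_T_le_gn _ _ G y).
  pose proof (hnorm_ge0 _ x). pose proof (hnorm_ge0 _ y).
  pose proof (hnorm_ge0 _ (G x)). pose proof (hnorm_ge0 _ (G y)).
  pose proof (hnorm_ge0 _ (a (G x))). pose proof (hnorm_ge0 _ (m x)).
  assert (hnorm (a (G x)) * hnorm (G y) <= Ma * graph_norm G x * graph_norm G y).
  { apply Rle_trans with (Ma * hnorm (G x) * hnorm (G y)). nra.
    rewrite !Rmult_assoc. apply Rmult_le_compat_l; auto. apply Rmult_le_compat; auto. }
  assert (hnorm (m x) * hnorm y <= Mm * graph_norm G x * graph_norm G y).
  { apply Rle_trans with (Mm * hnorm x * hnorm y). nra.
    rewrite !Rmult_assoc. apply Rmult_le_compat_l; auto. apply Rmult_le_compat; auto. }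
  nra.
Qed.

Lemma sf_re_im : exists mu c, 0 < mu /\ 0 <= c /\ forall x, domG x ->
  mu * (nrm H0 gi x * nrm H0 gi x) <= Re (sf x x) /\ Rabs (Im (sf x x)) <= c * Re (sf x x).
Proof.
  destruct (bl_bd _ a Ha) as [Ma [Ma0 HMa]]. destruct (bl_bd _ m Hm) as [Mm [Mm0 HMm]].
  destruct Hac as [mua [mua0 Hmua]]. destruct Hmc as [mum [mum0 Hmum]].
  exists (Rmin mua mum), (Ma / mua + Mm / mum). split. apply Rmin_glb_lt; auto.
  split. apply Rplus_le_le_0_compat; apply div_nonneg; lra.
  intros x Dx. unfold sf.
  pose proof (Hmua (G x)) as A1. pose proof (Hmum x) as A2.
  change (nrm H0 gi x) with (graph_norm G x). unfold graph_norm.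
  rewrite sqrt_sqrt by (apply (ip_pos _ _ _ SG); auto).
  rewrite gn_sq.
  assert (E1 : Re (Cplus (hinner (a (G x)) (G x)) (hinner (m x) x)) =
          Re (hinner (a (G x)) (G x)) + Re (hinner (m x) x)) by reflexivity.
  assert (E2 : Im (Cplus (hinner (a (G x)) (G x)) (hinner (m x) x)) =
          Im (hinner (a (G x)) (G x)) + Im (hinner (m x) x)) by reflexivity.
  rewrite E1, E2.
  pose proof (Rmin_l mua mum). pose proof (Rmin_r mua mum). pose proof (Rmin_glb_lt _ _ _ mua0 mum0).
  pose proof (hnorm_ge0 _ x). pose proof (hnorm_ge0 _ (G x)).
  split. nra.
  pose proof (CS_h _ (a (G x)) (G x)). pose proof (CS_h _ (m x) x).
  pose proof (HMa (G x)). pose proof (HMm x).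
  pose proof (hnorm_ge0 _ (a (G x))). pose proof (hnorm_ge0 _ (m x)).
  assert (B1 : Rabs (Im (hinner (a (G x)) (G x))) <= Ma * (hnorm (G x) * hnorm (G x))).
  { eapply Rle_trans. apply im_le_Cmod. nra. }
  assert (B2 : Rabs (Im (hinner (m x) x)) <= Mm * (hnorm x * hnorm x)).
  { eapply Rle_trans. apply im_le_Cmod. nra. }
  eapply Rle_trans. apply Rabs_triang.
  set (p := Ma / mua). set (q := Mm / mum).
  assert (p * mua = Ma) by (unfold p; field; lra).
  assert (q * mum = Mm) by (unfold q; field; lra).
  assert (0 <= p) by (apply div_nonneg; lra). assert (0 <= q) by (apply div_nonneg; lra).
  assert (0 <= hnorm x * hnorm x) by nra. assert (0 <= hnorm (G x) * hnorm (G x)) by nra.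
  assert (p * Re (hinner (a (G x)) (G x)) >= Ma * (hnorm (G x) * hnorm (G x))) by nra.
  assert (q * Re (hinner (m x) x) >= Mm * (hnorm x * hnorm x)) by nra.
  assert (R1 : 0 <= Re (hinner (a (G x)) (G x))) by nra.
  assert (R2 : 0 <= Re (hinner (m x) x)) by nra.
  assert (q * Re (hinner (a (G x)) (G x)) >= 0) by (apply Rle_ge, Rmult_le_pos; auto).
  assert (p * Re (hinner (m x) x) >= 0) by (apply Rle_ge, Rmult_le_pos; auto).
  nra.
Qed.

Definition sol u0 u := domG u /\ domD (a (G u)) /\ hsub (m u) (D (a (G u))) = hzero /\ W (hsub u u0).

Lemma sf_W_bd : exists M, 0 <= M /\ forall x y, W x -> W y ->
  Cmod (sf x y) <= M * nrm H0 gi x * nrm H0 gi y.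
Proof.
  destruct sf_bd as [M [M0 HM]]. exists M. split; auto. intros. apply HM; apply W_domG; auto.
Qed.

Lemma sol_orth u0 u v : sol u0 u -> W v -> sf u v = RtoC 0.
Proof.
  intros [Du [Dq [Eq _]]] [w Hw]. destruct (adj_G v w Hw) as [Dv Gv].
  apply hsub_eq in Eq. unfold sf. rewrite Gv, hinner_opp_r, Eq, (Hw _ Dq). ceq.
Qed.

Lemma sol_exists u0 : domG u0 -> exists u, sol u0 u.
Proof.
  intro D0.
  destruct sf_bd as [M [M0 HM]]. destruct sf_re_im as [mu [c [mu0 [c0 Hmu]]]].
  pose proof W_domG as WG.
  destruct (lax_milgram H0 W gi SW SWc sf M mu) with (lf := fun v => Copp (sf u0 v))
    (K := M * nrm H0 gi u0) as [u1 [Wu1 Hu1]].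
  - intros. apply sf_add_l; auto.
  - intros. apply sf_scal_l; auto.
  - intros. apply sf_add_r; auto.
  - intros. apply sf_scal_r; auto.
  - intros. apply HM; auto.
  - auto.
  - auto.
  - intros. apply Hmu; auto.
  - intros. rewrite sf_add_r by auto. ceq.
  - intros. rewrite sf_scal_r by auto. ceq.
  - intros. rewrite Cmod_opp. apply HM; auto.
  - set (u := hadd u0 u1).
    assert (Du : domG u) by (apply (dTadd _ _ _ _ HG); auto).
    assert (Hz : forall v, W v -> sf u v = RtoC 0).
    { intros v Wv. unfold u. rewrite sf_add_l, Hu1 by auto. ceq. }
    destruct (biadj H1 H0 domD D HD (a (G u)) (m u)) as [Dq Eq].
    { intros z zz Hz'. assert (Wz : W z) by (exists zz; auto).
      destruct (adj_G z zz Hz') as [Dz Gz].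
      pose proof (Hz z Wz) as E. unfold sf in E. rewrite Gz, hinner_opp_r in E.
      rewrite (hinner_conj (a (G u)) zz), (hinner_conj (m u) z).
      f_equal. apply Cplus_opp_eq. rewrite Cplus_comm. auto. }
    exists u. split; auto. split; auto. split. rewrite Eq. apply hsub_diag.
    unfold u. rewrite hadd_sub_l. auto.
Qed.

Lemma sol_unique u0 u1 u2 : sol u0 u1 -> sol u0 u2 -> u1 = u2.
Proof.
  intros S1 S2. destruct sf_re_im as [mu [c [mu0 [c0 Hmu]]]].
  pose proof S1 as [D1 [_ [_ W1]]]. pose proof S2 as [D2 [_ [_ W2]]].
  set (d := hsub u1 u2).
  assert (Wd : W d).
  { unfold d. rewrite <- (hsub_sub_sub _ u1 u2 u0). apply (Ssub _ _ _ SW); auto. }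
  assert (Dd : domG d) by (apply W_domG; auto).
  assert (E : sf d d = RtoC 0).
  { unfold d at 1. rewrite sf_sub_l, (sol_orth u0 u1), (sol_orth u0 u2) by auto. ceq. }
  destruct (Hmu d Dd) as [Hc _]. rewrite E in Hc. unfold Re, RtoC in Hc; simpl in Hc.
  pose proof (nrm_ge0 _ gi d).
  assert (nrm H0 gi d = 0).
  { assert (nrm H0 gi d * nrm H0 gi d <= 0) by (apply Rmult_le_reg_l with mu; lra). nra. }
  apply (nrm_zero _ _ _ SG) in H3; auto. apply hsub_eq; auto.
Qed.

Lemma sol_zero : sol hzero hzero.
Proof.
  pose proof (T_zero _ _ _ _ HG) as G0. pose proof (T_zero _ _ _ _ HD) as D0.
  assert (a hzero = hzero) by (rewrite <- (hscal_zero _ hzero), a_scal, !hscal_zero; auto).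
  assert (m hzero = hzero) by (rewrite <- (hscal_zero _ hzero), m_scal, !hscal_zero; auto).
  split. apply (dT0 _ _ _ _ HG). rewrite G0, H2. split. apply (dT0 _ _ _ _ HD).
  rewrite D0, H3, hsub_diag. split; auto. apply (S0 _ _ _ SW).
Qed.

Lemma sol_add u01 u02 u1 u2 : sol u01 u1 -> sol u02 u2 -> sol (hadd u01 u02) (hadd u1 u2).
Proof.
  intros [D1 [Q1 [E1 W1]]] [D2 [Q2 [E2 W2]]].
  split. apply (dTadd _ _ _ _ HG); auto.
  rewrite GA, a_add by auto. split. apply (dTadd _ _ _ _ HD); auto.
  split. rewrite (T_add _ _ _ _ HD), m_add, <- hsub_add_add, E1, E2 by auto. apply hadd_zero.
  rewrite <- hsub_add_add. apply (Sadd _ _ _ SW); auto.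
Qed.

Lemma sol_scal c u0 u : sol u0 u -> sol (hscal c u0) (hscal c u).
Proof.
  intros [D1 [Q1 [E1 W1]]].
  split. apply (dTscal _ _ _ _ HG); auto.
  rewrite GSc, a_scal by auto. split. apply (dTscal _ _ _ _ HD); auto.
  split. rewrite (T_scal _ _ _ _ HD), m_scal, <- hsub_scal, E1 by auto. apply hscal_zero_v.
  rewrite <- hsub_scal. apply (Sscal _ _ _ SW); auto.
Qed.

Lemma sol_self u0 u : sol u0 u -> domG u0 -> sf u u0 = sf u u.
Proof.
  intros Su D0. pose proof Su as [Du [_ [_ Wd]]].
  transitivity (sf u (hadd u0 (hsub u u0))).
  - rewrite sf_add_r, (sol_orth u0 u _ Su Wd); auto using W_domG. ceq.
  - rewrite hadd_comm, hsub_add_cancel; auto.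
Qed.

Lemma sol_gi u0 u v0 : sol u0 u -> V v0 -> giD (a (G u)) (G v0) = sf u v0.
Proof.
  intros [Du [Dq [Eq _]]] Vv. apply hsub_eq in Eq. unfold graph_inner, sf.
  rewrite (proj2 (V_D v0 Vv)), <- Eq. reflexivity.
Qed.

Lemma sol_V_norm u0 u : V u0 -> sol u0 u -> nrm H0 gi u0 <= nrm H0 gi u.
Proof.
  intros [D0 H0'] [Du [_ [_ Wd]]].
  set (d := hsub u u0).
  assert (Dd : domG d) by (apply W_domG; auto).
  pose proof (ip_expand _ _ _ SG u0 d 1 D0 Dd) as E. rewrite hscal_one in E.
  replace (hadd u0 d) with u in E by (unfold d; rewrite hadd_comm, hsub_add_cancel; auto).
  rewrite (ip_conj _ _ _ SG u0 d) in E by auto. rewrite (H0' d Wd) in E.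
  unfold nrm. apply sqrt_le_1_alt. rewrite E. assert (Z0 : Re (Cconj (RtoC 0)) = 0) by (unfold Re, Cconj, RtoC; simpl; ring). rewrite Z0.
  pose proof (ip_pos _ _ _ SG d Dd). lra.
Qed.

Lemma sol_bound : exists K, 0 <= K /\ forall u0 u, V u0 -> sol u0 u -> nrm H0 gi u <= K * nrm H0 gi u0.
Proof.
  destruct sf_bd as [M [M0 HM]]. destruct sf_re_im as [mu [c [mu0 [c0 Hmu]]]].
  exists (M / mu). split. apply div_nonneg; auto.
  intros u0 u V0 Su. pose proof V0 as [D0 _]. pose proof Su as [Du _].
  destruct (Hmu u Du) as [Hc _]. rewrite <- (sol_self u0 u) in Hc by auto.
  pose proof (re_le_Cmod (sf u u0)). pose proof (HM u u0 Du D0).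
  apply Rabs_le_inv in H2.
  pose proof (nrm_ge0 _ gi u). pose proof (nrm_ge0 _ gi u0).
  destruct (Req_dec (nrm H0 gi u) 0) as [E|E]. rewrite E. apply Rmult_le_pos; auto. apply div_nonneg; lra.
  assert (mu * nrm H0 gi u <= M * nrm H0 gi u0).
  { apply Rmult_le_reg_r with (nrm H0 gi u). lra. nra. }
  apply Rmult_le_reg_l with mu; auto.
  replace (mu * (M / mu * nrm H0 gi u0)) with (M * nrm H0 gi u0) by (field; lra). lra.
Qed.

Hypothesis Hk : kappa_hyp H0 H1 H domG G domD D kappa.

Lemma k_add u v : V u -> V v -> kappa (hadd u v) = hadd (kappa u) (kappa v).
Proof. apply Hk. Qed.
Lemma k_scal c u : V u -> kappa (hscal c u) = hscal c (kappa u).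
Proof. apply Hk. Qed.
Lemma k_zero : kappa hzero = hzero.
Proof.
  rewrite <- (hscal_zero _ hzero), k_scal, hscal_zero; auto. apply (S0 _ _ _ SV).
Qed.
Lemma k_bd : exists c, 0 <= c /\ forall u, V u -> hnorm (kappa u) <= c * nrm H0 gi u.
Proof.
  destruct Hk as [_ [[c Hc] _]]. exists (Rmax c 0). split. apply Rmax_r.
  intros u Vu. eapply Rle_trans. apply Hc; auto. apply Rmult_le_compat_r. apply nrm_ge0.
  apply Rmax_l.
Qed.
Lemma k_inj u v : V u -> V v -> kappa u = kappa v -> u = v.
Proof. apply Hk. Qed.
Lemma k_dense h eps : 0 < eps -> exists u, V u /\ hnorm (hsub h (kappa u)) < eps.
Proof. apply Hk. Qed.

Definition Pr (phi psi : H) := exists u0, V u0 /\ kappa u0 = phi /\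
  exists u, sol u0 u /\ forall v0, V v0 -> sf u v0 = hinner psi (kappa v0).

Notation DtN := (DtN_H H0 H1 H domG G domD D a m kappa).

Lemma DtN_Pr phi psi : DtN phi psi -> Pr phi psi.
Proof.
  intros [u0 [V0 [E0 [w [[Vw Hw] [u [Du [Dq [Eq [Wd [BDf Hproj]]]]]]]]]]].
  assert (Su : sol u0 u) by (repeat split; auto).
  exists u0. split; auto. split; auto. exists u. split; auto.
  intros v0 Vv. rewrite <- (sol_gi u0) by auto.
  pose proof (Hproj (G v0) (V_VD v0 Vv)) as P.
  assert (DGw : domD (G w)) by apply (proj1 (V_D w Vw)).
  assert (DGv : domD (G v0)) by apply (proj1 (V_D v0 Vv)).
  rewrite (ip_sub_l _ _ _ SD) in P by auto.
  apply Cminus_eq0 in P. rewrite P, V_iso by auto.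
  rewrite (ip_conj _ _ _ SG v0 w) by (apply Vw || apply Vv).
  rewrite <- Hw by auto. rewrite <- hinner_conj. reflexivity.
Qed.

Lemma Pr_DtN phi psi : Pr phi psi -> DtN phi psi.
Proof.
  intros [u0 [V0 [E0 [u [Su Hu]]]]].
  destruct k_bd as [ck [ck0 Hck]].
  destruct (riesz H0 V gi SV SVc (fun v => hinner (kappa v) psi) (ck * hnorm psi)) as [w [Vw Hw]].
  - intros. rewrite k_add, hinner_add_l; auto.
  - intros. rewrite k_scal, hinner_scal_l; auto.
  - intros x Vx. eapply Rle_trans. apply CS_h. pose proof (Hck x Vx).
    pose proof (hnorm_ge0 _ psi). pose proof (hnorm_ge0 _ (kappa x)). nra.
  - exists u0. split; auto. split; auto. exists w. split.
    + split; auto. intros. symmetry. auto.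
    + pose proof Su as [Du [Dq [Eq Wd]]]. exists u. repeat split; auto.
      * apply V_VD; auto.
      * apply V_VD; auto.
      * intros r Vr. set (v0 := D r).
        assert (Vv : V v0) by (apply VD_V; auto).
        assert (Er : r = G v0) by (symmetry; apply (VD_G r Vr)).
        assert (DGw : domD (G w)) by apply (proj1 (V_D w Vw)).
        rewrite (ip_sub_l _ _ _ SD) by (auto; apply Vr).
        rewrite Er. rewrite (sol_gi u0 u v0 Su Vv).
        rewrite V_iso by auto. rewrite Hu by auto.
        rewrite (ip_conj _ _ _ SG v0 w) by (apply Vw || apply Vv).
        rewrite Hw by auto. rewrite <- hinner_conj. ceq.
Qed.

Lemma DtN_iff phi psi : DtN phi psi <-> Pr phi psi.
Proof. split; [apply DtN_Pr | apply Pr_DtN]. Qed.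

Lemma sf_zero_l v : sf hzero v = RtoC 0.
Proof.
  rewrite <- (hscal_zero _ hzero), sf_scal_l. ceq. apply (dT0 _ _ _ _ HG).
Qed.

Lemma sol_domG u0 u : sol u0 u -> domG u. Proof. intros [Dd _]; auto. Qed.
Lemma V_domG u : V u -> domG u. Proof. intros [Dd _]; auto. Qed.

Lemma Pr_lin : linear_rel Pr.
Proof.
  split; [|split].
  - exists hzero. split. apply (S0 _ _ _ SV). split. apply k_zero.
    exists hzero. split. apply sol_zero. intros. rewrite sf_zero_l, hinner_zero_l. reflexivity.
  - intros x1 y1 x2 y2 [u01 [V1 [E1 [u1 [S1 H1']]]]] [u02 [V2 [E2 [u2 [S2 H2']]]]].
    exists (hadd u01 u02). split. apply (Sadd _ _ _ SV); auto.
    split. rewrite k_add, E1, E2; auto.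
    exists (hadd u1 u2). split. apply sol_add; auto.
    intros v0 Vv. rewrite sf_add_l, H1', H2', hinner_add_l; eauto using sol_domG.
  - intros c x y [u0 [V0 [E0 [u [Su Hu]]]]].
    exists (hscal c u0). split. apply (Sscal _ _ _ SV); auto.
    split. rewrite k_scal, E0; auto.
    exists (hscal c u). split. apply sol_scal; auto.
    intros v0 Vv. rewrite sf_scal_l, Hu, hinner_scal_l; eauto using sol_domG.
Qed.

Lemma Pr_sv : single_valued Pr.
Proof.
  intros x y1 y2 [u01 [V1 [E1 [u1 [S1 H1']]]]] [u02 [V2 [E2 [u2 [S2 H2']]]]].
  subst x. apply k_inj in E2; auto. subst u02.
  pose proof (sol_unique _ _ _ S1 S2). subst u2.
  set (d := hsub y1 y2).
  assert (Hd : forall v0, V v0 -> hinner d (kappa v0) = RtoC 0).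
  { intros. unfold d. rewrite hinner_sub_l, <- H1', <- H2' by auto. ceq. }
  assert (Hn0 : hnorm d = 0).
  { apply Rabs_small. intros eps Heps. rewrite Rabs_pos_eq by apply hnorm_ge0.
    destruct (k_dense d (eps / 2)) as [v [Vv Hv]]. lra.
    pose proof (Hd v Vv). pose proof (hnorm_ge0 _ d).
    assert (Re (hinner d d) = Re (hinner d (hsub d (kappa v)))).
    { rewrite hinner_sub_r, H2. unfold Re, Cminus, Cplus, Copp, RtoC; simpl. ring. }
    rewrite hnorm_sq in H4. pose proof (re_le_Cmod (hinner d (hsub d (kappa v)))).
    pose proof (CS_h _ d (hsub d (kappa v))). apply Rabs_le_inv in H5.
    pose proof (hnorm_ge0 _ (hsub d (kappa v))).
    destruct (Req_dec (hnorm d) 0) as [Z|Z]. lra.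
    assert (hnorm d <= hnorm (hsub d (kappa v))).
    { apply Rmult_le_reg_l with (hnorm d). lra. nra. }
    lra. }
  apply hsub_eq. fold d. apply hinner_zero_eq. rewrite hnorm_sq, Hn0. ring.
Qed.

Lemma Pr_form phi psi : Pr phi psi -> exists u, domG u /\ hinner psi phi = sf u u.
Proof.
  intros [u0 [V0 [E0 [u [Su Hu]]]]]. exists u. split. eauto using sol_domG.
  subst phi. rewrite <- Hu by auto. apply (sol_self u0); auto. apply V0.
Qed.

Lemma Pr_surj : forall f, exists x y, Pr x y /\ hadd y x = f.
Proof.
  intro f.
  assert (Ex : forall u0, exists u, V u0 -> sol u0 u).
  { intro u0. destruct (Classical_Prop.classic (V u0)) as [Vu|Vu].
    - destruct (sol_exists u0) as [u Hu]. apply Vu. exists u; auto.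
    - exists hzero. intro; contradiction. }
  apply functional_choice in Ex. destruct Ex as [Sol HSol].
  destruct sf_bd as [M [M0 HM]]. destruct sf_re_im as [mu [c [mu0 [c0 Hmu]]]].
  destruct sol_bound as [K [K0 HK]]. destruct k_bd as [ck [ck0 Hck]].
  assert (Sol_add : forall x y, V x -> V y -> Sol (hadd x y) = hadd (Sol x) (Sol y)).
  { intros. apply (sol_unique (hadd x y)). apply HSol. apply (Sadd _ _ _ SV); auto.
    apply sol_add; auto. }
  assert (Sol_scal : forall c x, V x -> Sol (hscal c x) = hscal c (Sol x)).
  { intros c' x Vx. apply (sol_unique (hscal c' x)). apply HSol. apply (Sscal _ _ _ SV); auto.
    apply sol_scal; auto. }
  assert (SolD : forall x, V x -> domG (Sol x)) by (intros; eapply sol_domG; eauto).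
  set (B := fun u0 v0 => Cplus (sf (Sol u0) v0) (hinner (kappa u0) (kappa v0))).
  destruct (lax_milgram H0 V gi SV SVc B (M * K + ck * ck) mu)
    with (lf := fun v => hinner f (kappa v)) (K := hnorm f * ck) as [u0 [V0 Hu0]].
  - intros. unfold B. rewrite Sol_add, sf_add_l, k_add, hinner_add_l by auto. ring.
  - intros. unfold B. rewrite Sol_scal, sf_scal_l, k_scal, hinner_scal_l by auto. ring.
  - intros. unfold B. rewrite sf_add_r, k_add, hinner_add_r by auto using V_domG. ring.
  - intros. unfold B. rewrite sf_scal_r, k_scal, hinner_scal_r by auto using V_domG. ring.
  - intros x y Vx Vy. unfold B. eapply Rle_trans. apply Cmod_triangle.
    pose proof (HM _ _ (SolD x Vx) (V_domG y Vy)).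
    pose proof (HK x _ Vx (HSol x Vx)).
    pose proof (CS_h _ (kappa x) (kappa y)). pose proof (Hck x Vx). pose proof (Hck y Vy).
    pose proof (nrm_ge0 _ gi x). pose proof (nrm_ge0 _ gi y). pose proof (nrm_ge0 _ gi (Sol x)).
    pose proof (hnorm_ge0 _ (kappa x)). pose proof (hnorm_ge0 _ (kappa y)).
    assert (M * nrm H0 gi (Sol x) * nrm H0 gi y <= M * K * nrm H0 gi x * nrm H0 gi y).
    { rewrite !Rmult_assoc. apply Rmult_le_compat_l; auto. rewrite <- Rmult_assoc.
      apply Rmult_le_compat_r; auto. }
    assert (hnorm (kappa x) * hnorm (kappa y) <= ck * ck * nrm H0 gi x * nrm H0 gi y).
    { replace (ck * ck * nrm H0 gi x * nrm H0 gi y) with ((ck * nrm H0 gi x) * (ck * nrm H0 gi y)) by ring.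
      apply Rmult_le_compat; auto. }
    nra.
  - auto.
  - pose proof (Rmult_le_pos _ _ M0 K0). nra.
  - intros x Vx. unfold B.
    destruct (Hmu _ (SolD x Vx)) as [Hc _].
    rewrite <- (sol_self x) in Hc by auto using V_domG.
    pose proof (sol_V_norm x _ Vx (HSol x Vx)) as N1.
    pose proof (nrm_ge0 _ gi x) as N2.
    assert (N3 : Re (Cplus (sf (Sol x) x) (hinner (kappa x) (kappa x))) =
            Re (sf (Sol x) x) + Re (hinner (kappa x) (kappa x))) by reflexivity.
    rewrite N3. pose proof (hinner_pos (kappa x)).
    assert (nrm H0 gi x * nrm H0 gi x <= nrm H0 gi (Sol x) * nrm H0 gi (Sol x))
      by (apply Rmult_le_compat; auto).
    nra.
  - intros. rewrite k_add, hinner_add_r; auto.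
  - intros. rewrite k_scal, hinner_scal_r; auto.
  - intros x Vx. eapply Rle_trans. apply CS_h. pose proof (Hck x Vx).
    pose proof (hnorm_ge0 _ f). rewrite Rmult_assoc. apply Rmult_le_compat_l; auto.
  - exists (kappa u0), (hsub f (kappa u0)). split.
    + exists u0. split; auto. split; auto. exists (Sol u0). split. apply HSol; auto.
      intros v0 Vv. specialize (Hu0 v0 Vv). unfold B in Hu0.
      rewrite hinner_sub_l, <- Hu0. ring.
    + apply hsub_add_cancel.
Qed.

Lemma Pr_sym : selfadjoint_bounded a -> selfadjoint_bounded m ->
  forall x y x' y', Pr x y -> Pr x' y' -> hinner y' x = hinner x' y.
Proof.
  intros Sa Sm x y x' y' [u0 [V0 [E0 [u [Su Hu]]]]] [u0' [V0' [E0' [u' [Su' Hu']]]]].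
  subst x x'. rewrite <- Hu' by auto. rewrite (hinner_conj y), <- Hu by auto.
  assert (E1 : sf u' u0 = sf u' u).
  { pose proof Su as [Du [_ [_ Wd]]].
    transitivity (sf u' (hadd u0 (hsub u u0))).
    - rewrite sf_add_r, (sol_orth u0' u' _ Su' Wd); auto using W_domG, V_domG. ceq.
    - rewrite hadd_comm, hsub_add_cancel; auto. }
  assert (E2 : sf u u0' = sf u u').
  { pose proof Su' as [Du [_ [_ Wd]]].
    transitivity (sf u (hadd u0' (hsub u' u0'))).
    - rewrite sf_add_r, (sol_orth u0 u _ Su Wd); auto using W_domG, V_domG. ceq.
    - rewrite hadd_comm, hsub_add_cancel; auto. }
  rewrite E1, E2. unfold sf. rewrite Sa, Sm. rewrite Cplus_conj, <- !hinner_conj. reflexivity.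
Qed.

Lemma final : m_sectorial DtN /\
  (selfadjoint_bounded a -> selfadjoint_bounded m -> selfadjoint_rel DtN).
Proof.
  assert (lin : linear_rel DtN).
  { destruct Pr_lin as [Z [Ad Sc]]. split; [|split].
    - apply DtN_iff; auto.
    - intros. apply DtN_iff. apply Ad; apply DtN_iff; auto.
    - intros. apply DtN_iff. apply Sc; apply DtN_iff; auto. }
  assert (sv : single_valued DtN).
  { intros x y1 y2 E1 E2. apply (Pr_sv x); apply DtN_iff; auto. }
  assert (surj : forall f, exists x y, DtN x y /\ hadd y x = f).
  { intro f. destruct (Pr_surj f) as [x [y [P E]]]. exists x, y. split; auto. apply DtN_iff; auto. }
  destruct sf_re_im as [mu [c [mu0 [c0 Hmu]]]].
  assert (sect : forall x y, DtN x y -> 0 <= Re (hinner y x) /\ Rabs (Im (hinner y x)) <= c * Re (hinner y x)).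
  { intros x y T. apply DtN_iff in T. destruct (Pr_form x y T) as [u [Du E]]. rewrite E.
    destruct (Hmu u Du) as [A1 A2]. split; auto. pose proof (nrm_ge0 _ gi u). nra. }
  split.
  - split; auto. split; auto. exists 0, c. split; auto. split.
    + intros x y T _. rewrite Rminus_0_r. apply sect; auto.
    + exists 1. split. lra. intro f. destruct (surj f) as [x [y [T E]]]. exists x, y. split; auto.
      replace (RtoC (1 - 0)) with (RtoC 1) by (f_equal; ring). rewrite hscal_one. auto.
  - intros Sa Sm.
    assert (sym : forall x y x' y', DtN x y -> DtN x' y' -> hinner y' x = hinner x' y).
    { intros. apply (Pr_sym Sa Sm); apply DtN_iff; auto. }
    split; auto. split; auto. split.
    + apply rel_dense; auto. intros. apply sect; auto.
    + intros x y. split.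
      * intros T x' y' T'. apply sym; auto.
      * apply rel_selfadj; auto.
Qed.

End Main.

Theorem theorem3p4 (H0 H1 H : CHilbert)
  (domG : H0 -> Prop) (G : H0 -> H1) (domD : H1 -> Prop) (D : H1 -> H0)
  (kappa : H0 -> H) (a : H1 -> H1) (m : H0 -> H0) :
  densely_defined_closed domG G ->
  densely_defined_closed domD D ->
  minus_adj_sub H0 H1 domG G domD D ->
  kappa_hyp H0 H1 H domG G domD D kappa ->
  bounded_linear a -> coercive a ->
  bounded_linear m -> coercive m ->
  m_sectorial (DtN_H H0 H1 H domG G domD D a m kappa) /\
  (selfadjoint_bounded a -> selfadjoint_bounded m ->
   selfadjoint_rel (DtN_H H0 H1 H domG G domD D a m kappa)).
Proof.
  intros. eapply final; eauto.
Qed.
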